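(* Let $r>0$ and let $f$ be analytic on an open neighbourhood of the closed half-disc $D_r:=\overline{B}_r(0)\cap\overline{\mathbb C}_+$. Let $Y,\eta$ be parameters with $0<\eta<Y<r$, and let $\alpha,\beta\in(0,1)$ satisfy $$\beta\Big(\frac{1-\alpha}{\alpha+\beta}\Big)^2>\frac{Y}{\eta}.$$ Let $N(\alpha r)$ be the number of zeros of $f$, counted with multiplicity, in $D_{\alpha r,\eta,Y}:=\{z\in\mathbb C:\eta\le\operatorname{Im}z\le Y,\ |z|\le\alpha r\}$. Then, if $f(i\beta r)\ne0$, $$N(\alpha r)\le\frac{2}{\log\Lambda(r)}\log\Big(\frac{1}{\min\{\beta,1-\beta\}}\frac{\sup_{z\in\partial D_r}|f(z)|}{|f(i\beta r)|}\Big),\qquad \Lambda(r):=\frac{1+\frac{4\beta\eta}{(\alpha+\beta)^2}\frac1r}{1+\frac{4Y}{(1-\alpha)^2}\frac1r},$$ and $\Lambda(r)>1$.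
   Context: $\overline{B}_r(0)$ is the closed disc of radius $r$ centered at $0$; $\overline{\mathbb C}_+=\{\operatorname{Im}z\ge0\}$; $\partial D_r$ is the boundary of the half-disc $D_r$ (the segment $[-r,r]$ together with the upper semicircle of radius $r$). *)

(* Defs.v *)
From Stdlib Require Import Reals List.
From Coquelicot Require Import Coquelicot.
Open Scope R_scope.

Definition C_open (U : C -> Prop) : Prop :=
  forall z, U z -> exists eps, 0 < eps /\ forall w, Cmod (w - z)%C < eps -> U w.

Definition analytic_on (U : C -> Prop) (f : C -> C) : Prop :=
  forall z0, U z0 -> exists rho, 0 < rho /\ exists a : nat -> C,
    forall z, Cmod (z - z0)%C < rho ->
      is_series (V := C_NormedModule) (fun n => (a n * (z - z0) ^ n)%C) (f z).

Definition half_disc (r : R) (z : C) : Prop := Cmod z <= r /\ 0 <= Im z.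

Definition half_disc_boundary (r : R) (z : C) : Prop :=
  (Im z = 0 /\ - r <= Re z <= r) \/ (Cmod z = r /\ 0 <= Im z).

Definition analytic_near_half_disc (r : R) (f : C -> C) : Prop :=
  exists U, C_open U /\ (forall z, half_disc r z -> U z) /\ analytic_on U f.

Definition zero_order (f : C -> C) (z0 : C) (m : nat) : Prop :=
  exists rho, 0 < rho /\ exists g : C -> C,
    analytic_on (fun w => Cmod (w - z0)%C < rho) g /\ g z0 <> 0%C /\
    forall z, Cmod (z - z0)%C < rho -> f z = ((z - z0) ^ m * g z)%C.

Definition strip_region (a eta Y : R) (z : C) : Prop :=
  eta <= Im z <= Y /\ Cmod z <= a.

Definition sup_boundary (r : R) (f : C -> C) : R :=
  real (Lub_Rbar (fun x => exists z, half_disc_boundary r z /\ x = Cmod (f z))).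

Definition Lambda (r alpha beta eta Y : R) : R :=
  (1 + (4 * beta * eta) / ((alpha + beta) ^ 2) * / r)
  / (1 + (4 * Y) / ((1 - alpha) ^ 2) * / r).

(* Main.v *)
Require Import Defs.
From Stdlib Require Import Reals List Lra Lia Psatz Arith Classical ClassicalEpsilon.
From Coquelicot Require Import Coquelicot.
Open Scope R_scope.

Lemma C_ball_of_Cmod (x y : C) (eps : R) : Cmod (y - x)%C < eps -> ball (M:=C_NormedModule) x eps y.
Proof.
  intros H. apply (norm_compat1 (K:=C_AbsRing) (V:=C_NormedModule)). exact H.
Qed.

Lemma C_Cmod_of_ball (x y : C) (eps : posreal) : ball (M:=C_NormedModule) x eps y -> Cmod (y - x)%C < norm_factor (K:=C_AbsRing) (V:=C_NormedModule) * eps.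
Proof.
  intros H. exact (norm_compat2 (K:=C_AbsRing) (V:=C_NormedModule) x y eps H).
Qed.

Definition CF := C_NormedModule.
Add Field C_field_inst : C_field_theory.

Lemma lim_C_of_norm (u : nat -> C) (l : C) :
  (forall eps, 0 < eps -> exists N, forall n, (N <= n)%nat -> Cmod (u n - l)%C < eps) ->
  filterlim u eventually (locally (T:=CF) l).
Proof.
  intros H. apply filterlim_locally. intros eps.
  destruct (H eps (cond_pos eps)) as [N HN]. exists N. intros n Hn.
  apply C_ball_of_Cmod. auto.
Qed.

Lemma norm_of_lim_C (u : nat -> C) (l : C) :
  filterlim u eventually (locally (T:=CF) l) ->
  forall eps, 0 < eps -> exists N, forall n, (N <= n)%nat -> Cmod (u n - l)%C < eps.
Proof.
  intros H eps Heps.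
  assert (Hf := norm_factor_gt_0 (K:=C_AbsRing) (V:=C_NormedModule)).
  set (e := mkposreal (eps / norm_factor (K:=C_AbsRing) (V:=C_NormedModule)) (Rdiv_lt_0_compat _ _ Heps Hf)).
  destruct (proj1 (filterlim_locally u l) H e) as [N HN].
  exists N. intros n Hn. specialize (HN n Hn).
  apply C_Cmod_of_ball in HN. simpl in HN. 
  replace eps with (norm_factor (K:=C_AbsRing) (V:=C_NormedModule) * (eps / norm_factor (K:=C_AbsRing) (V:=C_NormedModule))) by (field; lra). exact HN.
Qed.

Lemma lim_R_norm (u : nat -> R) (l : R) :
  filterlim u eventually (locally l) ->
  forall eps, 0 < eps -> exists N, forall n, (N <= n)%nat -> Rabs (u n - l) < eps.
Proof.
  intros H eps Heps.
  destruct (proj1 (filterlim_locally u l) H (mkposreal eps Heps)) as [N HN].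
  exists N. intros n Hn. specialize (HN n Hn). exact HN.
Qed.

Lemma Cmod_sum_n_le (a : nat -> C) (b : nat -> R) n :
  (forall k, Cmod (a k) <= b k) -> Cmod (sum_n (G:=CF) a n) <= sum_n b n.
Proof.
  intros H. unfold sum_n. eapply Rle_trans.
  apply (norm_sum_n_m (K:=C_AbsRing) (V:=C_NormedModule)).
  apply sum_n_m_le. intros k. apply H.
Qed.

Lemma Cmod_is_series_le (a : nat -> C) (l : C) (b : nat -> R) (lb : R) :
  is_series (V:=CF) a l -> is_series b lb -> (forall n, Cmod (a n) <= b n) -> Cmod l <= lb.
Proof.
  intros Ha Hb H.
  destruct (Rle_or_lt (Cmod l) lb) as [|Hlt]; auto. exfalso.
  set (eps := (Cmod l - lb)/2).
  assert (He : 0 < eps) by (unfold eps; lra).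
  destruct (norm_of_lim_C _ _ Ha eps He) as [N1 H1].
  destruct (lim_R_norm _ _ Hb eps He) as [N2 H2].
  specialize (H1 (N1+N2)%nat ltac:(lia)). specialize (H2 (N1+N2)%nat ltac:(lia)).
  assert (H3 := Cmod_sum_n_le a b (N1+N2)%nat H).
  assert (H4 : Cmod l <= Cmod (sum_n (G:=CF) a (N1+N2)) + Cmod (l - sum_n (G:=CF) a (N1+N2))%C).
  { replace l with (sum_n (G:=CF) a (N1 + N2) + (l - sum_n (G:=CF) a (N1 + N2)))%C at 1 by ring.
    apply Cmod_triangle. }
  rewrite <- (Cmod_opp (l - _)) in H4. replace (- (l - sum_n (G:=CF) a (N1 + N2)))%C with (sum_n (G:=CF) a (N1 + N2) - l)%C in H4 by ring.
  apply Rabs_def2 in H2. unfold eps in *. assert (H1x : Cmod (sum_n (G:=CF) a (N1+N2) - l)%C < (Cmod l - lb) / 2) by exact H1. assert (H2x : sum_n (G:=R_AbelianMonoid) b (N1+N2) - lb < (Cmod l - lb) / 2) by exact (proj1 H2). assert (H3x : Cmod (sum_n (G:=CF) a (N1 + N2)) <= sum_n (G:=R_AbelianMonoid) b (N1 + N2)) by exact H3. lra.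
Qed.

Lemma sum_f_R0_ge_term (u : nat -> R) N k :
  (forall n, 0 <= u n) -> (k <= N)%nat -> u k <= sum_f_R0 u N.
Proof.
  intros Hpos. induction N; intros Hk.
  - inversion Hk. simpl. lra.
  - simpl. destruct (Nat.eq_dec k (S N)) as [->|Hne].
    + assert (0 <= sum_f_R0 u N) by (apply cond_pos_sum; auto). lra.
    + assert (u k <= sum_f_R0 u N) by (apply IHN; lia). specialize (Hpos (S N)). lra.
Qed.

Lemma series_terms_bounded (a : nat -> C) l :
  is_series (V:=CF) a l -> exists K, forall n, Cmod (a n) <= K.
Proof.
  intros H. destruct (norm_of_lim_C _ _ H 1 Rlt_0_1) as [N HN].
  exists (2 + sum_f_R0 (fun k => Cmod (a k)) N).
  intros n. destruct (Compare_dec.le_lt_dec n N) as [Hn|Hn].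
  - assert (Cmod (a n) <= sum_f_R0 (fun k => Cmod (a k)) N).
    { apply (sum_f_R0_ge_term (fun k => Cmod (a k))); auto. intros; apply Cmod_ge_0. }
    lra.
  - destruct n as [|n]; [lia|].
    assert (E : a (S n) = (sum_n (G:=CF) a (S n) - l - (sum_n (G:=CF) a n - l))%C).
    { rewrite sum_Sn. simpl. change (plus (sum_n a n) (a (S n))) with (sum_n (G:=CF) a n + a (S n))%C. ring. }
    rewrite E.
    assert (H1 : Cmod (sum_n (G:=CF) a (S n) - l)%C < 1) by (apply HN; lia).
    assert (H2 : Cmod (sum_n (G:=CF) a n - l)%C < 1) by (apply HN; lia).
    assert (0 <= sum_f_R0 (fun k => Cmod (a k)) N) by (apply cond_pos_sum; intros; apply Cmod_ge_0).
    eapply Rle_trans. unfold Cminus at 1. apply Cmod_triangle. rewrite Cmod_opp. lra.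
Qed.

Lemma abs_conv (a : nat -> C) (g : C -> C) z0 rho :
  (forall z, Cmod (z - z0)%C < rho -> is_series (V:=CF) (fun n => a n * (z - z0) ^ n)%C (g z)) ->
  forall s, 0 <= s < rho -> ex_series (fun n => Cmod (a n) * s ^ n).
Proof.
  intros H s Hs. set (t := (s + rho) / 2).
  assert (Ht : 0 < t /\ s < t /\ t < rho) by (unfold t; lra).
  assert (Hz : Cmod ((z0 + RtoC t) - z0)%C < rho).
  { replace ((z0 + RtoC t) - z0)%C with (RtoC t) by ring. rewrite Cmod_R, Rabs_pos_eq; lra. }
  destruct (series_terms_bounded _ _ (H _ Hz)) as [K HK].
  apply (ex_series_le (K:=R_AbsRing) (V:=R_CompleteNormedModule) _ (fun n => K * (s / t) ^ n)).
  - intros n. change (norm (Cmod (a n) * s ^ n)) with (Rabs (Cmod (a n) * s ^ n)).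
    rewrite Rabs_pos_eq by (apply Rmult_le_pos; [apply Cmod_ge_0| apply pow_le; lra]).
    specialize (HK n). replace ((z0 + RtoC t) - z0)%C with (RtoC t) in HK by ring.
    rewrite Cmod_mult, Cmod_pow, Cmod_R, Rabs_pos_eq in HK by lra.
    replace (s ^ n) with (t ^ n * (s / t) ^ n) by (rewrite <- Rpow_mult_distr; f_equal; field; lra).
    rewrite <- Rmult_assoc. apply Rmult_le_compat_r; [apply pow_le; apply Rdiv_le_0_compat; lra| exact HK].
  - apply (ex_series_scal (K:=R_AbsRing) (V:=R_NormedModule) K (fun n => (s / t) ^ n)).
    exists (/ (1 - s / t)). apply is_series_geom. rewrite Rabs_pos_eq.
    + apply Rmult_lt_reg_r with t; [lra|]. field_simplify; lra.
    + apply Rdiv_le_0_compat; lra.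
Qed.


Lemma is_series_C_unique (a : nat -> C) l1 l2 :
  is_series (V:=CF) a l1 -> is_series (V:=CF) a l2 -> l1 = l2.
Proof.
  intros H1 H2. unfold is_series in *.
  eapply (filterlim_locally_unique (K:=C_AbsRing) (V:=C_NormedModule) (F:=eventually)); eauto.
Qed.

Lemma sum_n_C_zero n : sum_n (G:=CF) (fun _ : nat => RtoC 0) n = RtoC 0.
Proof.
  induction n. - rewrite sum_O. reflexivity.
  - rewrite sum_Sn, IHn. change (RtoC 0 + RtoC 0 = RtoC 0)%C. ring.
Qed.

Lemma is_series_C_zero : is_series (V:=CF) (fun _ : nat => RtoC 0) (RtoC 0).
Proof.
  apply lim_C_of_norm. intros eps He. exists 0%nat. intros n _.
  rewrite sum_n_C_zero. replace (RtoC 0 - RtoC 0)%C with (RtoC 0) by ring. rewrite Cmod_0. lra.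
Qed.

Definition LR (g : C -> C) (z0 : C) (rho : R) (a : nat -> C) : Prop :=
  0 < rho /\ (forall s, 0 <= s < rho -> ex_series (fun n => Cmod (a n) * s ^ n)) /\
  (forall z, Cmod (z - z0)%C < rho -> is_series (V:=CF) (fun n => a n * (z - z0) ^ n)%C (g z)).

Lemma LR_of_analytic U g z0 : analytic_on U g -> U z0 -> exists rho a, LR g z0 rho a.
Proof.
  intros H Hz. destruct (H z0 Hz) as [rho [Hr [a Ha]]]. exists rho, a.
  split; [auto|split; auto]. apply abs_conv with g z0. exact Ha.
Qed.

Lemma LR_shrink g z0 rho a rho' : LR g z0 rho a -> 0 < rho' <= rho -> LR g z0 rho' a.
Proof.
  intros [H1 [H2 H3]] Hr. split; [lra|split].
  - intros s Hs. apply H2. lra.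
  - intros z Hz. apply H3. lra.
Qed.

Lemma LR_ext g h z0 rho a : LR g z0 rho a -> (forall z, Cmod (z - z0)%C < rho -> g z = h z) -> LR h z0 rho a.
Proof.
  intros [H1 [H2 H3]] He. split; [auto|split; auto].
  intros z Hz. rewrite <- He by auto. auto.
Qed.

Lemma LR_value g z0 rho a : LR g z0 rho a -> g z0 = a 0%nat.
Proof.
  intros [H1 [H2 H3]].
  assert (Hz : Cmod (z0 - z0)%C < rho) by (replace (z0 - z0)%C with (RtoC 0) by ring; rewrite Cmod_0; lra).
  specialize (H3 z0 Hz). apply (is_series_C_unique _ _ _ H3).
  apply (is_series_decr_1 (K:=C_AbsRing) (V:=CF)).
  match goal with |- is_series _ ?l => replace l with (RtoC 0) end.
  2:{ change (RtoC 0 = a 0%nat + - (a 0%nat * (z0 - z0) ^ 0))%C. simpl. ring. } apply (is_series_ext (K:=C_AbsRing) (V:=CF)) with (fun _ : nat => RtoC 0).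
  - intros n. replace (z0 - z0)%C with (RtoC 0) by ring. simpl. ring.
  - apply is_series_C_zero.
Qed.

Lemma ex_series_le_R (u v : nat -> R) : (forall n, 0 <= u n <= v n) -> ex_series v -> ex_series u.
Proof.
  intros H Hv. apply (ex_series_le (K:=R_AbsRing) (V:=R_CompleteNormedModule) u v); auto.
  intros n. change (norm (u n)) with (Rabs (u n)). rewrite Rabs_pos_eq; apply H.
Qed.

Lemma ex_series_R_plus (u v : nat -> R) : ex_series u -> ex_series v -> ex_series (fun n => u n + v n).
Proof. intros. apply (ex_series_plus (K:=R_AbsRing) (V:=R_NormedModule)); auto. Qed.

Lemma ex_series_R_scal (k : R) (u : nat -> R) : ex_series u -> ex_series (fun n => k * u n).
Proof. intros. apply (ex_series_scal (K:=R_AbsRing) (V:=R_NormedModule)); auto. Qed.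

Lemma is_series_C_scal (k : C) (u : nat -> C) l : is_series (V:=CF) u l -> is_series (V:=CF) (fun n => k * u n)%C (k * l)%C.
Proof. intros H. apply (is_series_scal (K:=C_AbsRing) (V:=CF) k u l H). Qed.

Lemma is_series_C_plus (u v : nat -> C) lu lv : is_series (V:=CF) u lu -> is_series (V:=CF) v lv -> is_series (V:=CF) (fun n => u n + v n)%C (lu + lv)%C.
Proof. intros H1 H2. apply (is_series_plus (K:=C_AbsRing) (V:=CF) u v lu lv H1 H2). Qed.

Lemma is_series_C_ext (u v : nat -> C) l : (forall n, u n = v n) -> is_series (V:=CF) u l -> is_series (V:=CF) v l.
Proof. intros. apply (is_series_ext (K:=C_AbsRing) (V:=CF) u v l); auto. Qed.

Lemma Cplus_opp0 (x : C) : x = Cplus x (Copp (RtoC 0)).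
Proof. ring. Qed.

Lemma is_series_C_shift (u : nat -> C) l : is_series (V:=CF) (fun k => u (S k)) l -> u 0%nat = RtoC 0 -> is_series (V:=CF) u l.
Proof.
  intros H H0. apply (is_series_decr_1 (K:=C_AbsRing) (V:=CF)).
  match goal with |- is_series _ ?m => replace m with l end. exact H.
  change (@eq C l (Cplus l (Copp (u 0%nat)))). rewrite H0. apply Cplus_opp0.
Qed.

Lemma LR_scal g z0 rho a k : LR g z0 rho a -> LR (fun z => k * g z)%C z0 rho (fun n => k * a n)%C.
Proof.
  intros [H1 [H2 H3]]. split; [auto|split].
  - intros s Hs. apply ex_series_le_R with (fun n => Cmod k * (Cmod (a n) * s ^ n)).
    + intros n. rewrite Cmod_mult. split.
      * apply Rmult_le_pos; [apply Rmult_le_pos; apply Cmod_ge_0|apply pow_le; lra].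
      * lra.
    + apply ex_series_R_scal. auto.
  - intros z Hz. apply is_series_C_ext with (fun n => k * (a n * (z - z0) ^ n))%C.
    + intros n. ring.
    + apply is_series_C_scal. auto.
Qed.

Lemma LR_plus g h z0 rho a b : LR g z0 rho a -> LR h z0 rho b -> LR (fun z => g z + h z)%C z0 rho (fun n => a n + b n)%C.
Proof.
  intros [H1 [H2 H3]] [_ [H2' H3']]. split; [auto|split].
  - intros s Hs. apply ex_series_le_R with (fun n => Cmod (a n) * s ^ n + Cmod (b n) * s ^ n).
    + intros n. assert (0 <= s ^ n) by (apply pow_le; lra). split.
      * apply Rmult_le_pos; [apply Cmod_ge_0|auto].
      * rewrite <- Rmult_plus_distr_r. apply Rmult_le_compat_r; auto. apply Cmod_triangle.
    + apply ex_series_R_plus; auto.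
  - intros z Hz. apply is_series_C_ext with (fun n => a n * (z - z0) ^ n + b n * (z - z0) ^ n)%C.
    + intros n. ring.
    + apply is_series_C_plus; auto.
Qed.

Definition aff_coef (p q z0 : C) (a : nat -> C) (n : nat) : C :=
  match n with
  | O => ((p * z0 + q) * a 0%nat)%C
  | S m => (p * a m + (p * z0 + q) * a (S m))%C
  end.

Lemma LR_mul_aff g z0 rho a p q : LR g z0 rho a -> LR (fun z => (p * z + q) * g z)%C z0 rho (aff_coef p q z0 a).
Proof.
  intros [H1 [H2 H3]]. set (be := (p * z0 + q)%C). split; [auto|split].
  - intros s Hs.
    apply ex_series_le_R with (fun n => Cmod be * (Cmod (a n) * s ^ n) +
        match n with O => 0 | S m => Cmod p * s * (Cmod (a m) * s ^ m) end).
    + intros n. assert (0 <= s ^ n) by (apply pow_le; lra). split.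
      * apply Rmult_le_pos; [apply Cmod_ge_0|auto].
      * destruct n as [|m]; simpl.
        -- rewrite Cmod_mult. fold be. lra.
        -- eapply Rle_trans. apply Rmult_le_compat_r. apply Rmult_le_pos; [lra|apply pow_le; lra]. apply Cmod_triangle.
           rewrite !Cmod_mult. fold be. nra.
    + apply ex_series_R_plus. apply ex_series_R_scal. auto.
      apply ex_series_incr_1. simpl. apply ex_series_R_scal. apply H2. auto.
  - intros z Hz.
    apply is_series_C_ext with (fun n => be * (a n * (z - z0) ^ n) +
        match n with O => RtoC 0 | S m => (p * (z - z0)) * (a m * (z - z0) ^ m) end)%C.
    + intros [|m]; simpl; fold be; ring.
    + replace ((p * z + q) * g z)%C with (be * g z + (p * (z - z0)) * g z)%C by (unfold be; ring).
      apply is_series_C_plus. apply is_series_C_scal. auto.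
      apply is_series_C_shift. apply is_series_C_scal. auto. reflexivity.
Qed.

Lemma LR_tail g z0 rho a k s : LR g z0 rho a -> 0 < s < rho ->
  exists Cc, 0 <= Cc /\ forall z, Cmod (z - z0)%C <= s ->
    Cmod (g z - sum_n (G:=CF) (fun n => a n * (z - z0) ^ n)%C k)%C <= Cc * Cmod (z - z0)%C ^ (S k).
Proof.
  intros [H1 [H2 H3]] Hs.
  assert (Hex : ex_series (fun n => Cmod (a n) * s ^ n)) by (apply H2; lra).
  set (A := Series (fun n => Cmod (a n) * s ^ n)).
  assert (Hex' : ex_series (fun j => Cmod (a (S k + j)%nat) * s ^ (S k + j))).
  { apply (ex_series_incr_n (K:=R_AbsRing) (V:=R_NormedModule) (fun n => Cmod (a n) * s ^ n) (S k)). exact Hex. }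
  set (T := Series (fun j => Cmod (a (S k + j)%nat) * s ^ (S k + j))).
  assert (HT : T <= A).
  { unfold A. rewrite (Series_incr_n _ (S k)) by (auto; lia). fold T. simpl.
    assert (0 <= sum_f_R0 (fun n => Cmod (a n) * s ^ n) k).
    { apply cond_pos_sum. intros n. apply Rmult_le_pos; [apply Cmod_ge_0|apply pow_le; lra]. }
    lra. }
  assert (HT0 : 0 <= T).
  { unfold T. assert (E0 : Series (fun _ : nat => 0) = 0).
    { rewrite (Series_ext (fun _ : nat => 0) (fun n : nat => 0 * 1)) by (intros; ring).
      rewrite Series_scal_l. ring. }
    rewrite <- E0. apply Series_le; auto.
    intros n. split; [lra|]. apply Rmult_le_pos; [apply Cmod_ge_0|apply pow_le; lra]. }
  exists (A / s ^ S k). split.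
  { apply Rdiv_le_0_compat; [lra|apply pow_lt; lra]. }
  intros z Hz. set (w := (z - z0)%C).
  assert (Hw : Cmod w < rho) by (unfold w; lra).
  specialize (H3 z Hw). fold w in H3.
  set (Sk := sum_n (G:=CF) (fun n => a n * w ^ n)%C k).
  assert (Htail : is_series (V:=CF) (fun j => a (S k + j)%nat * w ^ (S k + j))%C (g z - Sk)%C).
  { apply (is_series_incr_n (K:=C_AbsRing) (V:=CF) (fun n => a n * w ^ n)%C (S k) (g z - Sk)%C); [lia|].
    match goal with |- is_series _ ?m => replace m with (g z) end. exact H3.
    change (@eq C (g z) (Cplus (Cminus (g z) Sk) Sk)). ring. }
  assert (Hb : is_series (fun j => Cmod w ^ S k / s ^ S k * (Cmod (a (S k + j)%nat) * s ^ (S k + j))) (Cmod w ^ S k / s ^ S k * T)).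
  { apply (is_series_scal (K:=R_AbsRing) (V:=R_NormedModule)). apply Series_correct. exact Hex'. }
  eapply Rle_trans. apply (Cmod_is_series_le _ _ _ _ Htail Hb).
  - intros j. rewrite Cmod_mult, Cmod_pow.
    assert (Hw0 : 0 <= Cmod w) by apply Cmod_ge_0.
    assert (Hsk : 0 < s ^ S k) by (apply pow_lt; lra).
    replace (Cmod w ^ S k / s ^ S k * (Cmod (a (S k + j)%nat) * s ^ (S k + j)))
      with (Cmod (a (S k + j)%nat) * (Cmod w ^ S k * s ^ j)) by (rewrite pow_add; field; lra).
    rewrite pow_add.
    apply Rmult_le_compat_l; [apply Cmod_ge_0|]. apply Rmult_le_compat_l; [apply pow_le; auto|].
    apply pow_incr. split; [exact Hw0|exact Hz].
  - assert (Hsk : 0 < s ^ S k) by (apply pow_lt; lra).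
    assert (0 <= Cmod w ^ S k) by (apply pow_le; apply Cmod_ge_0).
    replace (A / s ^ S k * Cmod w ^ S k) with (Cmod w ^ S k / s ^ S k * A) by (field; lra).
    apply Rmult_le_compat_l; auto. apply Rdiv_le_0_compat; lra.
Qed.


Lemma Cpow_cis th n : (((cos th, sin th) : C) ^ n)%C = ((cos (INR n * th), sin (INR n * th)) : C).
Proof.
  induction n.
  - simpl. rewrite Rmult_0_l, cos_0, sin_0. reflexivity.
  - rewrite Cpow_S, IHn. rewrite S_INR.
    replace ((INR n + 1) * th) with (th + INR n * th) by ring.
    rewrite cos_plus, sin_plus. unfold Cmult. simpl. f_equal; ring.
Qed.

Lemma C_eq (x y : C) : Re x = Re y -> Im x = Im y -> x = y.
Proof. destruct x, y. simpl. intros; subst; auto. Qed.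

Lemma Cmod_pos_sq (z : C) : Cmod z ^ 2 = Re z ^ 2 + Im z ^ 2.
Proof. apply Cmod2_alt. Qed.

Lemma polar (z : C) : z <> RtoC 0 -> exists th, z = ((Cmod z * cos th, Cmod z * sin th) : C).
Proof.
  intros Hz. assert (Hm : 0 < Cmod z) by (apply Cmod_gt_0; auto).
  set (x := Re z / Cmod z).
  assert (H2 := Cmod_pos_sq z).
  assert (Hx : -1 <= x <= 1).
  { unfold x. assert (Rabs (Re z) <= Cmod z) by apply re_le_Cmod.
    apply Rabs_le_between in H. split; [apply Rmult_le_reg_r with (Cmod z); [lra|]; field_simplify; lra|].
    apply Rmult_le_reg_r with (Cmod z); [lra|]; field_simplify; lra. }
  assert (Hs : sqrt (1 - x²) = Rabs (Im z) / Cmod z).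
  { assert (Hc2 : Cmod z * Cmod z = Re z * Re z + Im z * Im z) by nra.
    apply sqrt_lem_1.
    - unfold x. rewrite Rsqr_div' by lra. unfold Rsqr.
      replace (1 - Re z * Re z / (Cmod z * Cmod z)) with ((Cmod z * Cmod z - Re z * Re z) / (Cmod z * Cmod z)) by (field; lra).
      apply Rdiv_le_0_compat; nra.
    - apply Rdiv_le_0_compat; [apply Rabs_pos|lra].
    - unfold x. rewrite Rsqr_div' by lra. unfold Rsqr.
      replace (Rabs (Im z) / Cmod z * (Rabs (Im z) / Cmod z)) with ((Rabs (Im z) * Rabs (Im z)) / (Cmod z * Cmod z)) by (field; lra).
      rewrite <- Rabs_mult, Rabs_pos_eq by nra. field_simplify; [|lra|lra]. f_equal. lra. }
  destruct (Rle_or_lt 0 (Im z)) as [Hi|Hi].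
  - exists (acos x). apply C_eq; simpl.
    + rewrite cos_acos by auto. unfold x. field. lra.
    + rewrite sin_acos, Hs by auto. rewrite Rabs_pos_eq by auto. field. lra.
  - exists (- acos x). apply C_eq; simpl.
    + rewrite cos_neg, cos_acos by auto. unfold x. field. lra.
    + rewrite sin_neg, sin_acos, Hs by auto. rewrite Rabs_left by auto. field. lra.
Qed.

Lemma C_root (z : C) (k : nat) : (1 <= k)%nat -> exists u : C, (u ^ k)%C = z.
Proof.
  intros Hk. destruct (Ceq_dec z (RtoC 0)) as [->|Hz].
  - exists (RtoC 0). destruct k; [lia|]. rewrite Cpow_S. apply Cmult_0_l.
  - destruct (polar z Hz) as [th Hth].
    assert (Hm : 0 < Cmod z) by (apply Cmod_gt_0; auto).
    assert (HkR : 0 < INR k) by (apply lt_0_INR; lia).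
    exists (RtoC (Rpower (Cmod z) (/ INR k)) * ((cos (th / INR k), sin (th / INR k)) : C))%C.
    rewrite Cpow_mult_l, Cpow_cis, <- RtoC_pow.
    rewrite <- Rpower_pow by (unfold Rpower; apply exp_pos).
    rewrite Rpower_mult. replace (/ INR k * INR k) with 1 by (field; lra).
    rewrite Rpower_1 by auto. replace (INR k * (th / INR k)) with th by (field; lra).
    rewrite Hth at 2. apply C_eq; simpl; ring.
Qed.


Lemma min_nat (P : nat -> Prop) n : P n -> exists k, P k /\ forall j, (j < k)%nat -> ~ P j.
Proof.
  induction n as [n IH] using lt_wf_ind. intros Hn.
  destruct (classic (exists j, (j < n)%nat /\ P j)) as [[j [Hj Pj]]|Hno].
  - apply (IH j Hj Pj).
  - exists n. split; auto. intros j Hj Pj. apply Hno. eauto.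
Qed.

Lemma sum_n_lead (e : nat -> C) (w : C) k : (forall n, (n < k)%nat -> e n = RtoC 0) ->
  sum_n (G:=CF) (fun n => e n * w ^ n)%C k = (e k * w ^ k)%C.
Proof.
  intros H. destruct k as [|k].
  - rewrite sum_O. reflexivity.
  - rewrite sum_Sn.
    assert (Hz : forall j, (j <= k)%nat -> sum_n (G:=CF) (fun n => e n * w ^ n)%C j = RtoC 0).
    { induction j; intros Hj.
      - rewrite sum_O. rewrite H by lia. change (RtoC 0 * w ^ 0 = RtoC 0)%C. ring.
      - rewrite sum_Sn, IHj by lia. rewrite (H (S j)) by lia. change (RtoC 0 + RtoC 0 * w ^ S j = RtoC 0)%C. ring. }
    rewrite Hz by lia. change (RtoC 0 + e (S k) * w ^ S k = e (S k) * w ^ S k)%C. ring.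
Qed.

Lemma LR_zero_series H z0 rho e : LR H z0 rho e -> (forall n, e n = RtoC 0) ->
  forall z, Cmod (z - z0)%C < rho -> H z = RtoC 0.
Proof.
  intros [_ [_ H3]] He z Hz. specialize (H3 z Hz).
  apply (is_series_C_unique _ _ _ H3). apply is_series_C_ext with (fun _ => RtoC 0).
  - intros n. rewrite He. ring.
  - apply is_series_C_zero.
Qed.

Lemma Cmod_div_le (x y : C) (m : R) : 0 < m -> m <= Cmod y -> Cmod (x / y)%C <= Cmod x / m.
Proof.
  intros Hm Hy. assert (y <> RtoC 0) by (intro E; rewrite E, Cmod_0 in Hy; lra).
  rewrite Cmod_div by auto. apply Rmult_le_compat_l; [apply Cmod_ge_0|].
  apply Rinv_le_contravar; lra.
Qed.

Lemma locmax (F P : C -> C) p rho a b delta :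
  LR F p rho a -> LR P p rho b -> (forall z, Cmod (z - p)%C < rho -> P z <> RtoC 0) ->
  0 < delta -> (forall z, Cmod (z - p)%C < delta -> Cmod (F z / P z)%C <= Cmod (F p / P p)%C) ->
  exists d', 0 < d' /\ forall z, Cmod (z - p)%C < d' -> Cmod (F z / P z)%C = Cmod (F p / P p)%C.
Proof.
  intros HF HP HPnz Hd Hmax.
  assert (Hrho : 0 < rho) by (destruct HF; auto).
  assert (Hpp : Cmod (p - p)%C < rho) by (replace (p - p)%C with (RtoC 0) by ring; rewrite Cmod_0; auto).
  set (c0 := F p). set (d0 := P p).
  assert (Hd0 : d0 <> RtoC 0) by (apply HPnz; auto).
  assert (Hd0m : 0 < Cmod d0) by (apply Cmod_gt_0; auto).
  destruct (Ceq_dec c0 (RtoC 0)) as [Hc0|Hc0].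
  { exists delta. split; auto. intros z Hz. apply Rle_antisym; auto.
    fold c0 d0. rewrite Hc0. replace (RtoC 0 / d0)%C with (RtoC 0) by (field; auto). rewrite Cmod_0. apply Cmod_ge_0. }
  assert (Hc0m : 0 < Cmod c0) by (apply Cmod_gt_0; auto).
  set (e := fun n => (d0 * a n + (- c0) * b n)%C).
  assert (HH : LR (fun z => d0 * F z + (- c0) * P z)%C p rho e).
  { apply LR_plus; apply LR_scal; auto. }
  assert (He0 : e 0%nat = RtoC 0).
  { unfold e. rewrite <- (LR_value _ _ _ _ HF), <- (LR_value _ _ _ _ HP). fold c0 d0. ring. }
  destruct (classic (exists n, e n <> RtoC 0)) as [[n0 Hn0]|Hall].
  2:{ exists rho. split; auto. intros z Hz.
      assert (E : (d0 * F z + - c0 * P z)%C = RtoC 0).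
      { apply (LR_zero_series _ _ _ _ HH); auto. intros n. destruct (Ceq_dec (e n) (RtoC 0)); auto.
        exfalso; apply Hall; eauto. }
      f_equal. assert (P z <> RtoC 0) by auto. fold c0 d0.
      apply (f_equal (fun v => v / (d0 * P z))%C) in E.
      replace (RtoC 0 / (d0 * P z))%C with (RtoC 0) in E by (field; auto).
      replace (F z / P z)%C with ((d0 * F z + - c0 * P z) / (d0 * P z) + c0 / d0)%C by (field; auto).
      rewrite E. ring. }
  destruct (min_nat (fun n => e n <> RtoC 0) n0 Hn0) as [k [Hek Hmin]].
  assert (Hk1 : (1 <= k)%nat) by (destruct k; [contradiction|lia]).
  assert (Hlow : forall n, (n < k)%nat -> e n = RtoC 0).
  { intros n Hn. destruct (Ceq_dec (e n) (RtoC 0)); auto. exfalso. apply (Hmin n Hn); auto. }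
  set (s := rho / 2).
  destruct (LR_tail _ _ _ _ k s HH ltac:(unfold s; lra)) as [C1 [HC1 HT1]].
  destruct (LR_tail _ _ _ _ 0%nat s HP ltac:(unfold s; lra)) as [C2 [HC2 HT2]].
  destruct (C_root (c0 * d0 / e k)%C k Hk1) as [u Hu].
  assert (Hu0 : u <> RtoC 0).
  { intro E. rewrite E in Hu. destruct k; [lia|]. rewrite Cpow_S, Cmult_0_l in Hu.
    apply (f_equal (fun v => v * e (S k))%C) in Hu.
    replace (c0 * d0 / e (S k) * e (S k))%C with (c0 * d0)%C in Hu by (field; auto).
    rewrite Cmult_0_l in Hu. apply (Cmult_neq_0 c0 d0 Hc0 Hd0). auto. }
  assert (Hum : 0 < Cmod u) by (apply Cmod_gt_0; auto).
  set (m := Cmod (c0 / d0)%C).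
  assert (Hm : 0 < m) by (unfold m; rewrite Cmod_div by auto; apply Rdiv_lt_0_compat; auto).
  set (K := 2 * (Cmod c0 * C2 * Cmod u + C1 * Cmod u ^ (S k)) / Cmod d0 ^ 2).
  assert (HK : 0 <= K).
  { unfold K. apply Rdiv_le_0_compat; [|apply pow_lt; auto]. apply Rmult_le_pos; [lra|].
    apply Rplus_le_le_0_compat; [apply Rmult_le_pos; [apply Rmult_le_pos|]; lra|].
    apply Rmult_le_pos; [lra|apply pow_le; lra]. }
  set (t := Rmin (Rmin (s / Cmod u) (delta / (2 * Cmod u))) (Rmin (Cmod d0 / (2 * (C2 + 1) * Cmod u)) (m / (K + 1))) / 2).
  assert (Hs : 0 < s) by (unfold s; lra).
  assert (Ht0 : 0 < t).
  { unfold t. apply Rdiv_lt_0_compat; [|lra]. repeat apply Rmin_pos; apply Rdiv_lt_0_compat; try lra; nra. }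
  assert (Ht1 : t * Cmod u <= s).
  { assert (t <= s / Cmod u). { unfold t. pose proof (Rmin_l (Rmin (s / Cmod u) (delta / (2 * Cmod u))) (Rmin (Cmod d0 / (2 * (C2 + 1) * Cmod u)) (m / (K + 1)))). pose proof (Rmin_l (s / Cmod u) (delta / (2 * Cmod u))). assert (0 < s / Cmod u) by (apply Rdiv_lt_0_compat; lra). lra. }
    apply (Rmult_le_compat_r (Cmod u)) in H; [|lra]. replace (s / Cmod u * Cmod u) with s in H by (field; lra). auto. }
  assert (Ht2 : t * Cmod u < delta).
  { assert (t < delta / (2 * Cmod u)). { unfold t. pose proof (Rmin_l (Rmin (s / Cmod u) (delta / (2 * Cmod u))) (Rmin (Cmod d0 / (2 * (C2 + 1) * Cmod u)) (m / (K + 1)))). pose proof (Rmin_r (s / Cmod u) (delta / (2 * Cmod u))). assert (0 < delta / (2 * Cmod u)) by (apply Rdiv_lt_0_compat; lra). lra. }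
    apply (Rmult_lt_compat_r (Cmod u)) in H; [|lra]. replace (delta / (2 * Cmod u) * Cmod u) with (delta / 2) in H by (field; lra). lra. }
  assert (Ht3 : C2 * (t * Cmod u) <= Cmod d0 / 2).
  { assert (t <= Cmod d0 / (2 * (C2 + 1) * Cmod u)). { unfold t. pose proof (Rmin_r (Rmin (s / Cmod u) (delta / (2 * Cmod u))) (Rmin (Cmod d0 / (2 * (C2 + 1) * Cmod u)) (m / (K + 1)))). pose proof (Rmin_l (Cmod d0 / (2 * (C2 + 1) * Cmod u)) (m / (K + 1))). assert (0 < Cmod d0 / (2 * (C2 + 1) * Cmod u)) by (apply Rdiv_lt_0_compat; nra). lra. }
    apply (Rmult_le_compat_r (Cmod u)) in H; [|lra]. replace (Cmod d0 / (2 * (C2 + 1) * Cmod u) * Cmod u) with (Cmod d0 / (2 * (C2 + 1))) in H by (field; lra).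
    assert (C2 * (t * Cmod u) <= (C2 + 1) * (t * Cmod u)) by nra.
    assert ((C2 + 1) * (t * Cmod u) <= (C2 + 1) * (Cmod d0 / (2 * (C2 + 1)))) by (apply Rmult_le_compat_l; lra).
    replace ((C2 + 1) * (Cmod d0 / (2 * (C2 + 1)))) with (Cmod d0 / 2) in H1 by (field; lra). lra. }
  assert (Ht4 : t * K < m).
  { assert (t < m / (K + 1)). { unfold t. pose proof (Rmin_r (Rmin (s / Cmod u) (delta / (2 * Cmod u))) (Rmin (Cmod d0 / (2 * (C2 + 1) * Cmod u)) (m / (K + 1)))). pose proof (Rmin_r (Cmod d0 / (2 * (C2 + 1) * Cmod u)) (m / (K + 1))). assert (0 < m / (K + 1)) by (apply Rdiv_lt_0_compat; lra). lra. }
    apply (Rmult_lt_compat_r (K + 1)) in H; [|lra]. replace (m / (K + 1) * (K + 1)) with m in H by (field; lra). nra. }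
  exfalso.
  set (w := (RtoC t * u)%C). set (z := (p + w)%C).
  assert (Hzw : (z - p)%C = w) by (unfold z; ring).
  assert (Hwm : Cmod w = t * Cmod u) by (unfold w; rewrite Cmod_mult, Cmod_R, Rabs_pos_eq; lra).
  assert (Hzr : Cmod (z - p)%C <= s) by (rewrite Hzw, Hwm; auto).
  assert (Hzd : Cmod (z - p)%C < delta) by (rewrite Hzw, Hwm; auto).
  assert (Hzrho : Cmod (z - p)%C < rho) by (unfold s in Hzr; lra).
  specialize (Hmax z Hzd). fold c0 d0 m in Hmax.
  specialize (HT1 z Hzr). specialize (HT2 z Hzr).
  rewrite sum_n_lead in HT1 by auto. rewrite sum_O in HT2. rewrite Hzw in HT1, HT2.
  rewrite <- (LR_value _ _ _ _ HP) in HT2. fold d0 in HT2. simpl in HT2.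
  replace (d0 * 1)%C with d0 in HT2 by ring. rewrite Rmult_1_r, Hwm in HT2. rewrite Hwm in HT1.
  set (Pz := P z) in *. set (Fz := F z) in *.
  assert (HPz : Cmod d0 / 2 <= Cmod Pz).
  { assert (Cmod d0 <= Cmod Pz + Cmod (Pz - d0)%C).
    { replace d0 with (Pz + - (Pz - d0))%C at 1 by ring. eapply Rle_trans; [apply Cmod_triangle|]. rewrite Cmod_opp. lra. }
    lra. }
  assert (HPz0 : Pz <> RtoC 0) by (apply HPnz; auto).
  assert (Hwk : (e k * w ^ k)%C = (RtoC (t ^ k) * (c0 * d0))%C).
  { unfold w. rewrite Cpow_mult_l, Hu, <- RtoC_pow. field. auto. }
  set (X1 := ((d0 * Fz + - c0 * Pz - e k * w ^ k) / (d0 * Pz))%C).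
  set (X2 := (RtoC (t ^ k) * c0 * (d0 - Pz) / (d0 * Pz))%C).
  assert (Hid : (Fz / Pz)%C = (c0 / d0 * (RtoC 1 + RtoC (t ^ k)) + (X1 + X2))%C).
  { unfold X1, X2. rewrite Hwk. field. split; auto. }
  assert (Hd0Pz : Cmod d0 * (Cmod d0 / 2) <= Cmod (d0 * Pz)%C).
  { rewrite Cmod_mult. apply Rmult_le_compat_l; lra. }
  assert (HX1 : Cmod X1 <= 2 * C1 * (t * Cmod u) ^ S k / Cmod d0 ^ 2).
  { unfold X1. eapply Rle_trans. apply (Cmod_div_le _ _ (Cmod d0 * (Cmod d0 / 2))); [nra|auto].
    replace (2 * C1 * (t * Cmod u) ^ S k / Cmod d0 ^ 2) with (C1 * (t * Cmod u) ^ S k / (Cmod d0 * (Cmod d0 / 2))) by (field; lra).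
    apply Rmult_le_compat_r; [apply Rlt_le, Rinv_0_lt_compat; nra|]. exact HT1. }
  assert (HX2 : Cmod X2 <= 2 * t ^ k * Cmod c0 * C2 * (t * Cmod u) / Cmod d0 ^ 2).
  { unfold X2. eapply Rle_trans. apply (Cmod_div_le _ _ (Cmod d0 * (Cmod d0 / 2))); [nra|auto].
    rewrite !Cmod_mult, Cmod_R, Rabs_pos_eq by (apply pow_le; lra).
    replace (2 * t ^ k * Cmod c0 * C2 * (t * Cmod u) / Cmod d0 ^ 2) with (t ^ k * Cmod c0 * (C2 * (t * Cmod u)) / (Cmod d0 * (Cmod d0 / 2))) by (field; lra).
    apply Rmult_le_compat_r; [apply Rlt_le, Rinv_0_lt_compat; nra|].
    apply Rmult_le_compat_l; [apply Rmult_le_pos; [apply pow_le; lra|apply Cmod_ge_0]|].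
    rewrite <- Cmod_opp. replace (- (d0 - Pz))%C with (Pz - d0)%C by ring. exact HT2. }
  assert (HX : Cmod (X1 + X2)%C <= K * t ^ S k).
  { eapply Rle_trans; [apply Cmod_triangle|].
    replace (K * t ^ S k) with (2 * C1 * (t * Cmod u) ^ S k / Cmod d0 ^ 2 + 2 * t ^ k * Cmod c0 * C2 * (t * Cmod u) / Cmod d0 ^ 2)
      by (unfold K; rewrite Rpow_mult_distr; simpl; field; lra). lra. }
  assert (HA : Cmod (c0 / d0 * (RtoC 1 + RtoC (t ^ k)))%C = m * (1 + t ^ k)).
  { rewrite Cmod_mult. fold m. rewrite <- RtoC_plus, Cmod_R, Rabs_pos_eq; auto. assert (0 <= t ^ k) by (apply pow_le; lra). lra. }
  assert (Htri : m * (1 + t ^ k) <= Cmod (Fz / Pz)%C + Cmod (X1 + X2)%C).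
  { rewrite <- HA. rewrite Hid. replace (c0 / d0 * (RtoC 1 + RtoC (t ^ k)))%C with ((c0 / d0 * (RtoC 1 + RtoC (t ^ k)) + (X1 + X2)) + - (X1 + X2))%C at 1 by ring.
    eapply Rle_trans; [apply Cmod_triangle|]. rewrite Cmod_opp. lra. }
  assert (Htk : 0 < t ^ k) by (apply pow_lt; lra).
  assert (m * t ^ k <= K * t ^ S k) by lra.
  simpl in H. assert (m <= K * t) by nra. lra.
Qed.


Lemma Cmod_le_sum (z : C) : Cmod z <= Rabs (Re z) + Rabs (Im z).
Proof.
  assert (H := Cmod2_alt z). assert (H0 := Cmod_ge_0 z).
  assert (Ha := Rabs_pos (Re z)). assert (Hb := Rabs_pos (Im z)).
  rewrite <- (pow2_abs (Re z)), <- (pow2_abs (Im z)) in H.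
  destruct (Rle_or_lt (Cmod z) (Rabs (Re z) + Rabs (Im z))); auto. nra.
Qed.

Lemma list_max {T} (l : list T) (g : T -> R) (x0 : T) : In x0 l -> exists x, In x l /\ forall y, In y l -> g y <= g x.
Proof.
  revert x0. induction l as [|h l IH]; intros x0 Hin; [inversion Hin|].
  destruct l as [|h2 l2].
  - exists h. split; [left; auto|]. intros y [<-|[]]. lra.
  - destruct (IH h2 (or_introl eq_refl)) as [x [Hx Hmx]].
    destruct (Rle_or_lt (g h) (g x)).
    + exists x. split; [right; auto|]. intros y [<-|Hy]; auto.
    + exists h. split; [left; auto|]. intros y [<-|Hy]; [lra|]. specialize (Hmx y Hy). lra.
Qed.

Definition cpt (x : Compactness.Tn 2 R) : C := (fst x, fst (snd x)).

Lemma evt (r : R) (phi : C -> R) : 0 < r ->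
  (forall z, half_disc r z -> forall eps, 0 < eps -> exists d, 0 < d /\
     forall w, half_disc r w -> Cmod (w - z)%C < d -> Rabs (phi w - phi z) < eps) ->
  exists p, half_disc r p /\ forall z, half_disc r z -> phi z <= phi p.
Proof.
  intros Hr Hc. apply NNPP. intros Hno.
  assert (H : forall p, half_disc r p -> exists z, half_disc r z /\ phi p < phi z).
  { intros p Hp. apply NNPP. intros Hn. apply Hno. exists p. split; auto.
    intros z Hz. destruct (Rle_or_lt (phi z) (phi p)); auto. exfalso. apply Hn; eauto. }
  assert (H0 : half_disc r (RtoC 0)) by (unfold half_disc; rewrite Cmod_0; simpl; lra).
  assert (Hex : forall x : Compactness.Tn 2 R, exists dv : posreal * C,
     half_disc r (snd dv) /\
     (half_disc r (cpt x) -> forall w, half_disc r w -> Rabs (Re w - Re (cpt x)) < fst dv -> Rabs (Im w - Im (cpt x)) < fst dv -> phi w < phi (snd dv)) /\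
     (~ half_disc r (cpt x) -> forall w, Rabs (Re w - Re (cpt x)) < fst dv -> Rabs (Im w - Im (cpt x)) < fst dv -> ~ half_disc r w)).
  { intros x. destruct (classic (half_disc r (cpt x))) as [Hx|Hx].
    - destruct (H _ Hx) as [v [Hv Hlt]].
      destruct (Hc _ Hx (phi v - phi (cpt x)) ltac:(lra)) as [d [Hd Hd']].
      exists (mkposreal (d / 2) ltac:(lra), v). simpl. split; auto. split; [|tauto].
      intros _ w Hw H1 H2. assert (Cmod (w - cpt x)%C < d).
      { eapply Rle_lt_trans; [apply Cmod_le_sum|]. simpl. simpl in H1, H2. unfold Re, Im, Rminus in *. lra. }
      specialize (Hd' w Hw H3). apply Rabs_def2 in Hd'. lra.
    - unfold half_disc in Hx. apply not_and_or in Hx. destruct Hx as [Hx|Hx].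
      + apply Rnot_le_lt in Hx.
        exists (mkposreal ((Cmod (cpt x) - r) / 2) ltac:(lra), RtoC 0). simpl. split; auto. split; [intros [Hh _]; lra|].
        intros _ w H1 H2 [Hw1 Hw2].
        assert (Cmod (cpt x - w)%C < Cmod (cpt x) - r).
        { eapply Rle_lt_trans; [apply Cmod_le_sum|]. simpl. simpl in H1, H2.
          rewrite Rabs_minus_sym in H1, H2. unfold Re, Im, Rminus in *. lra. }
        assert (Cmod (cpt x) <= Cmod w + Cmod (cpt x - w)%C).
        { replace (cpt x) with (w + (cpt x - w))%C at 1 by ring. apply Cmod_triangle. }
        lra.
      + apply Rnot_le_lt in Hx.
        exists (mkposreal (- Im (cpt x)) ltac:(lra), RtoC 0). simpl. split; auto. split; [intros [_ Hh]; lra|].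
        intros _ w H1 H2 [Hw1 Hw2]. simpl in *. apply Rabs_def2 in H2. lra. }
  set (dv := fun x => proj1_sig (constructive_indefinite_description _ (Hex x))).
  assert (Hdv : forall x : Compactness.Tn 2 R, half_disc r (snd (dv x)) /\
     (half_disc r (cpt x) -> forall w, half_disc r w -> Rabs (Re w - Re (cpt x)) < fst (dv x) -> Rabs (Im w - Im (cpt x)) < fst (dv x) -> phi w < phi (snd (dv x))) /\
     (~ half_disc r (cpt x) -> forall w, Rabs (Re w - Re (cpt x)) < fst (dv x) -> Rabs (Im w - Im (cpt x)) < fst (dv x) -> ~ half_disc r w)).
  { intros x. exact (proj2_sig (constructive_indefinite_description _ (Hex x))). }
  apply (compactness_list 2 (- r, (0, tt)) (r, (r, tt)) (fun x => fst (dv x))). intros [l Hl].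
  destruct (Hl (0, (0, tt))) as [t0 [Ht0 _]]. { simpl. lra. }
  destruct (list_max l (fun x => phi (snd (dv x))) t0 Ht0) as [ts [Hts Hmax]].
  destruct (Hdv ts) as [Hvin _].
  set (x := snd (dv ts)).
  destruct (Hl (Re x, (Im x, tt))) as [t [Ht [Hb Hclose]]].
  { simpl. destruct Hvin as [Hv1 Hv2]. fold x in Hv1, Hv2.
    assert (Rabs (Re x) <= Cmod x) by apply re_le_Cmod.
    assert (Rabs (Im x) <= Cmod x).
    { assert (H' := Cmod2_alt x). assert (0 <= Cmod x) by apply Cmod_ge_0.
      destruct (Rle_or_lt (Rabs (Im x)) (Cmod x)); auto. rewrite <- (pow2_abs (Im x)) in H'. nra. }
    apply Rabs_le_between in H1. apply Rabs_le_between in H2. lra. }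
  destruct (Hdv t) as [_ [Hin Hout]].
  destruct t as [t1 [t2 []]]. simpl in Hclose. destruct Hclose as [C1 [C2 _]].
  destruct (classic (half_disc r (cpt (t1, (t2, tt))))) as [Htin|Htin].
  - specialize (Hin Htin x Hvin). unfold cpt in Hin. simpl in Hin. unfold Re, Im in Hin.
    specialize (Hin C1 C2). specialize (Hmax _ Ht). simpl in Hmax. fold x in Hmax. lra.
  - apply (Hout Htin x); auto.
Qed.


Definition LQ (G : C -> C) (z0 : C) := exists rho F P a b, LR F z0 rho a /\ LR P z0 rho b /\
  (forall z, Cmod (z - z0)%C < rho -> P z <> RtoC 0 /\ G z = (F z / P z)%C).

Lemma Cmod_zero_diff (z : C) : Cmod (z - z)%C = 0.
Proof. replace (z - z)%C with (RtoC 0) by ring. apply Cmod_0. Qed.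

Lemma LQ_lip G z0 : LQ G z0 -> exists d L, 0 < d /\ 0 <= L /\
  forall z, Cmod (z - z0)%C < d -> Cmod (G z - G z0)%C <= L * Cmod (z - z0)%C.
Proof.
  intros [rho [F [P [a [b [HF [HP HG]]]]]]].
  assert (Hrho : 0 < rho) by (destruct HF; auto).
  destruct (HG z0) as [Hb0 HG0]. { rewrite Cmod_zero_diff; auto. }
  set (a0 := F z0) in *. set (b0 := P z0) in *.
  assert (Hbm : 0 < Cmod b0) by (apply Cmod_gt_0; auto).
  set (s := rho / 2).
  destruct (LR_tail _ _ _ _ 0%nat s HF ltac:(unfold s; lra)) as [C1 [HC1 HT1]].
  destruct (LR_tail _ _ _ _ 0%nat s HP ltac:(unfold s; lra)) as [C2 [HC2 HT2]].
  set (L := 2 * (C1 * Cmod b0 + Cmod a0 * C2) / Cmod b0 ^ 2).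
  exists (Rmin s (Cmod b0 / (2 * (C2 + 1)))), L. split; [apply Rmin_pos; [unfold s; lra|apply Rdiv_lt_0_compat; lra]|].
  split. { unfold L. apply Rdiv_le_0_compat; [|apply pow_lt; lra]. assert (0 <= Cmod a0) by apply Cmod_ge_0. nra. }
  intros z Hz. assert (Hz1 : Cmod (z - z0)%C <= s) by (pose proof (Rmin_l s (Cmod b0 / (2 * (C2 + 1)))); lra).
  assert (Hz2 : Cmod (z - z0)%C <= Cmod b0 / (2 * (C2 + 1))) by (pose proof (Rmin_r s (Cmod b0 / (2 * (C2 + 1)))); lra).
  specialize (HT1 z Hz1). specialize (HT2 z Hz1). rewrite sum_O in HT1, HT2. simpl in HT1, HT2.
  rewrite <- (LR_value _ _ _ _ HF) in HT1. rewrite <- (LR_value _ _ _ _ HP) in HT2. fold a0 in HT1. fold b0 in HT2.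
  replace (a0 * 1)%C with a0 in HT1 by ring. replace (b0 * 1)%C with b0 in HT2 by ring. rewrite Rmult_1_r in HT1, HT2.
  destruct (HG z) as [Hpz HGz]. { unfold s in Hz1; lra. }
  rewrite HGz, HG0. set (w := Cmod (z - z0)%C) in *.
  assert (Hw0 : 0 <= w) by apply Cmod_ge_0.
  assert (HC2w : C2 * w <= Cmod b0 / 2).
  { assert (C2 * w <= (C2 + 1) * w) by nra.
    assert ((C2 + 1) * w <= (C2 + 1) * (Cmod b0 / (2 * (C2 + 1)))) by (apply Rmult_le_compat_l; lra).
    replace ((C2 + 1) * (Cmod b0 / (2 * (C2 + 1)))) with (Cmod b0 / 2) in H0 by (field; lra). lra. }
  assert (HPz : Cmod b0 / 2 <= Cmod (P z)).
  { assert (Cmod b0 <= Cmod (P z) + Cmod (P z - b0)%C).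
    { replace b0 with (P z + - (P z - b0))%C at 1 by ring. eapply Rle_trans; [apply Cmod_triangle|]. rewrite Cmod_opp. lra. }
    lra. }
  replace (F z / P z - a0 / b0)%C with (((F z - a0) * b0 + - a0 * (P z - b0)) / (P z * b0))%C by (field; auto).
  eapply Rle_trans. apply (Cmod_div_le _ _ (Cmod b0 / 2 * Cmod b0)); [nra|rewrite Cmod_mult; apply Rmult_le_compat_r; lra].
  eapply Rle_trans. apply Rmult_le_compat_r. apply Rlt_le, Rinv_0_lt_compat; nra.
  eapply Rle_trans; [apply Cmod_triangle|]. rewrite !Cmod_mult, Cmod_opp. apply Rplus_le_compat.
  apply Rmult_le_compat_r; [lra|exact HT1]. apply Rmult_le_compat_l; [apply Cmod_ge_0|exact HT2].
  unfold L. right. field. lra.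
Qed.

Lemma LQ_cont G z0 : LQ G z0 -> forall eps, 0 < eps -> exists d, 0 < d /\
  forall z, Cmod (z - z0)%C < d -> Cmod (G z - G z0)%C < eps.
Proof.
  intros HL eps He. destruct (LQ_lip _ _ HL) as [d [L [Hd [HL0 Hlip]]]].
  exists (Rmin d (eps / (L + 1))). split. { apply Rmin_pos; auto. apply Rdiv_lt_0_compat; lra. }
  intros z Hz. assert (Hz1 : Cmod (z - z0)%C < d) by (pose proof (Rmin_l d (eps / (L + 1))); lra).
  assert (Hz2 : Cmod (z - z0)%C < eps / (L + 1)) by (pose proof (Rmin_r d (eps / (L + 1))); lra).
  specialize (Hlip z Hz1). assert (0 <= Cmod (z - z0)%C) by apply Cmod_ge_0.
  apply (Rmult_lt_compat_r (L + 1)) in Hz2; [|lra]. replace (eps / (L + 1) * (L + 1)) with eps in Hz2 by (field; lra).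
  nra.
Qed.

Lemma LQ_locmax G z0 delta : LQ G z0 -> 0 < delta ->
  (forall z, Cmod (z - z0)%C < delta -> Cmod (G z) <= Cmod (G z0)) ->
  exists d', 0 < d' /\ forall z, Cmod (z - z0)%C < d' -> Cmod (G z) = Cmod (G z0).
Proof.
  intros [rho [F [P [a [b [HF [HP HG]]]]]]] Hd Hmax.
  assert (Hrho : 0 < rho) by (destruct HF; auto).
  set (r' := Rmin rho delta).
  assert (Hr' : 0 < r' <= rho) by (split; [apply Rmin_pos; auto|apply Rmin_l]).
  assert (Hr'd : r' <= delta) by apply Rmin_r.
  destruct (locmax F P z0 r' a b r' (LR_shrink _ _ _ _ _ HF Hr') (LR_shrink _ _ _ _ _ HP Hr')) as [d' [Hd' Hcst]].
  - intros z Hz. apply HG. lra.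
  - lra.
  - intros z Hz. destruct (HG z) as [_ E]; [lra|]. destruct (HG z0) as [_ E0]; [rewrite Cmod_zero_diff; lra|].
    rewrite <- E, <- E0. apply Hmax. lra.
  - exists (Rmin d' r'). split; [apply Rmin_pos; lra|]. intros z Hz.
    assert (Hz1 : Cmod (z - z0)%C < d') by (pose proof (Rmin_l d' r'); lra).
    assert (Hz2 : Cmod (z - z0)%C < r') by (pose proof (Rmin_r d' r'); lra).
    destruct (HG z) as [_ E]; [lra|]. destruct (HG z0) as [_ E0]; [rewrite Cmod_zero_diff; lra|].
    rewrite E, E0. apply Hcst. auto.
Qed.

Lemma Cmod_rev_tri (x y : C) : Rabs (Cmod x - Cmod y) <= Cmod (x - y)%C.
Proof.
  assert (H1 : Cmod x <= Cmod y + Cmod (x - y)%C).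
  { replace x with (y + (x - y))%C at 1 by ring. apply Cmod_triangle. }
  assert (H2 : Cmod y <= Cmod x + Cmod (x - y)%C).
  { replace y with (x + - (x - y))%C at 1 by ring. eapply Rle_trans; [apply Cmod_triangle|]. rewrite Cmod_opp. lra. }
  apply Rabs_le. lra.
Qed.

Lemma Cmod_im0 (y : R) : Cmod ((0, y) : C) = Rabs y.
Proof. unfold Cmod. rewrite <- sqrt_Rsqr_abs. f_equal. simpl. unfold Rsqr. ring. Qed.

Lemma Im_le_Cmod (z : C) : Rabs (Im z) <= Cmod z.
Proof.
  assert (H' := Cmod2_alt z). assert (0 <= Cmod z) by apply Cmod_ge_0.
  destruct (Rle_or_lt (Rabs (Im z)) (Cmod z)); auto. rewrite <- (pow2_abs (Im z)) in H'.
  assert (0 <= Re z ^ 2) by (apply pow2_ge_0). nra.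
Qed.

Lemma Cmod_mono_im (x y y' : R) : Rabs y' <= Rabs y -> Cmod ((x, y') : C) <= Cmod ((x, y) : C).
Proof.
  intros H. unfold Cmod. apply sqrt_le_1_alt. unfold fst, snd.
  rewrite <- (pow2_abs y), <- (pow2_abs y'). assert (0 <= Rabs y') by apply Rabs_pos. nra.
Qed.

Theorem maxprin r G : 0 < r -> (forall z, half_disc r z -> LQ G z) ->
  exists q, half_disc_boundary r q /\ forall z, half_disc r z -> Cmod (G z) <= Cmod (G q).
Proof.
  intros Hr HLQ.
  destruct (evt r (fun z => Cmod (G z)) Hr) as [p [Hp Hmax]].
  { intros z Hz eps He. destruct (LQ_cont _ _ (HLQ z Hz) eps He) as [d [Hd Hd']].
    exists d. split; auto. intros w _ Hw. eapply Rle_lt_trans; [apply Cmod_rev_tri|]. auto. }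
  set (Mx := Cmod (G p)) in *.
  destruct (classic (half_disc_boundary r p)) as [Hb|Hb].
  { exists p. split; auto. }
  destruct Hp as [Hp1 Hp2].
  assert (Hpi : 0 < Im p /\ Cmod p < r).
  { unfold half_disc_boundary in Hb. split.
    - destruct (Rle_lt_or_eq_dec _ _ Hp2) as [|E]; auto. exfalso. apply Hb. left. split; auto.
      assert (Rabs (Re p) <= Cmod p) by apply re_le_Cmod. apply Rabs_le_between. lra.
    - destruct (Rle_lt_or_eq_dec _ _ Hp1) as [|E]; auto. exfalso. apply Hb. right. auto. }
  destruct Hpi as [Hpi Hpr].
  set (g := fun t : R => ((Re p, (1 - t) * Im p) : C)).
  assert (Hg0 : g 0 = p) by (unfold g; apply C_eq; simpl; ring).
  assert (Hgin : forall t, 0 <= t <= 1 -> half_disc r (g t) /\ Cmod (g t) <= Cmod p).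
  { intros t Ht. assert (Cmod (g t) <= Cmod p).
    { unfold g. replace (Cmod p) with (Cmod ((Re p, Im p) : C)) by (destruct p; reflexivity). apply Cmod_mono_im.
      rewrite Rabs_mult, (Rabs_pos_eq (Im p)), (Rabs_pos_eq (1 - t)) by lra. nra. }
    split; auto. split; [lra|]. unfold g. simpl. nra. }
  assert (Hgd : forall s t, Cmod (g s - g t)%C = Rabs (s - t) * Im p).
  { intros s t. unfold g. replace (Cminus (Re p, (1 - s) * Im p) (Re p, (1 - t) * Im p)) with ((0, (t - s) * Im p) : C).
    - rewrite Cmod_im0, Rabs_mult, (Rabs_pos_eq (Im p)) by lra. rewrite Rabs_minus_sym. auto.
    - apply C_eq; simpl; ring. }
  set (E := fun t => 0 <= t <= 1 /\ forall s, 0 <= s <= t -> Cmod (G (g s)) = Mx).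
  assert (HE0 : E 0).
  { split; [lra|]. intros s Hs. replace s with 0 by lra. rewrite Hg0. auto. }
  assert (HEb : bound E) by (exists 1; intros t [Ht _]; lra).
  destruct (completeness E HEb (ex_intro _ 0 HE0)) as [T [HTub HTlub]].
  assert (HT0 : 0 <= T) by (apply HTub; auto).
  assert (HT1 : T <= 1) by (apply HTlub; intros t [Ht _]; lra).
  assert (Cl1 : forall s, 0 <= s < T -> Cmod (G (g s)) = Mx).
  { intros s Hs. apply NNPP. intros Hn.
    assert (T <= s). { apply HTlub. intros t [Ht Ht']. destruct (Rle_or_lt t s) as [|Hts]; auto.
      exfalso. apply Hn. apply Ht'. lra. }
    lra. }
  assert (Cl2 : Cmod (G (g T)) = Mx).
  { destruct (Rle_lt_or_eq_dec _ _ HT0) as [HTp|HT0e].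
    2:{ rewrite <- HT0e, Hg0. auto. }
    apply NNPP. intros Hn.
    assert (He : 0 < Rabs (Cmod (G (g T)) - Mx)) by (apply Rabs_pos_lt; lra).
    destruct (LQ_cont _ _ (HLQ (g T) (proj1 (Hgin T ltac:(lra)))) _ He) as [d [Hd Hd']].
    set (s := Rmax 0 (T - d / (2 * Im p))).
    assert (Hs : 0 <= s < T).
    { unfold s. split; [apply Rmax_l|]. apply Rmax_lub_lt; auto.
      assert (0 < d / (2 * Im p)) by (apply Rdiv_lt_0_compat; lra). lra. }
    assert (Hsd : Cmod (g s - g T)%C < d).
    { rewrite Hgd. rewrite Rabs_left by lra.
      assert (T - d / (2 * Im p) <= s) by apply Rmax_r.
      assert (-(s - T) <= d / (2 * Im p)) by lra.
      apply (Rmult_le_compat_r (Im p)) in H0; [|lra].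
      replace (d / (2 * Im p) * Im p) with (d / 2) in H0 by (field; lra). lra. }
    specialize (Hd' _ Hsd).
    assert (H1 := Cmod_rev_tri (G (g s)) (G (g T))). rewrite (Cl1 s Hs) in H1.
    rewrite Rabs_minus_sym in H1. lra. }
  assert (HT : T = 1).
  { destruct (Rle_lt_or_eq_dec _ _ HT1) as [HTl|]; auto. exfalso.
    destruct (Hgin T ltac:(lra)) as [HgT HgTp].
    assert (HImT : 0 < Im (g T)) by (unfold g; simpl; nra).
    set (r0 := Rmin (r - Cmod (g T)) (Im (g T))).
    assert (Hr0 : 0 < r0) by (apply Rmin_pos; lra).
    destruct (LQ_locmax G (g T) r0 (HLQ _ HgT) Hr0) as [d' [Hd' Hcst]].
    { intros z Hz. rewrite Cl2. apply Hmax. split.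
      - assert (Hz' : Cmod (z - g T)%C < r - Cmod (g T)) by (eapply Rlt_le_trans; [exact Hz| apply Rmin_l]).
        assert (Cmod z <= Cmod (g T) + Cmod (z - g T)%C).
        { replace z with (g T + (z - g T))%C at 1 by ring. apply Cmod_triangle. }
        lra.
      - assert (Hz' : Cmod (z - g T)%C < Im (g T)) by (eapply Rlt_le_trans; [exact Hz| apply Rmin_r]).
        assert (H1 := Im_le_Cmod (z - g T)%C). apply Rabs_le_between in H1.
        assert (Him : Im (z - g T)%C = Im z - Im (g T)) by (unfold Cminus; rewrite im_plus, im_opp; ring).
        rewrite Him in H1. lra. }
    set (T' := Rmin 1 (T + d' / (2 * Im p))).
    assert (HT' : T < T').
    { unfold T'. apply Rmin_glb_lt; auto. assert (0 < d' / (2 * Im p)) by (apply Rdiv_lt_0_compat; lra). lra. }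
    assert (HET' : E T').
    { split. { split; [lra|apply Rmin_l]. }
      intros s Hs. destruct (Rlt_or_le s T) as [Hst|Hst]; [apply Cl1; lra|].
      rewrite <- Cl2. apply Hcst. rewrite Hgd. rewrite Rabs_pos_eq by lra.
      assert (T' <= T + d' / (2 * Im p)) by apply Rmin_r.
      assert (s - T <= d' / (2 * Im p)) by lra.
      apply (Rmult_le_compat_r (Im p)) in H0; [|lra].
      replace (d' / (2 * Im p) * Im p) with (d' / 2) in H0 by (field; lra). lra. }
    specialize (HTub _ HET'). lra. }
  exists (g 1). split.
  - left. unfold g. simpl. split; [ring|]. assert (Rabs (Re p) <= Cmod p) by apply re_le_Cmod.
    apply Rabs_le_between. lra.
  - intros z Hz. rewrite <- HT, Cl2. apply Hmax. auto.
Qed.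


Definition prodaff (L : list (C * C)) (z : C) : C :=
  fold_right (fun pq acc => ((fst pq * z + snd pq) * acc)%C) (RtoC 1) L.

Lemma prodaff_app L1 L2 z : prodaff (L1 ++ L2) z = (prodaff L1 z * prodaff L2 z)%C.
Proof. induction L1 as [|h L1 IH]; simpl. ring. rewrite IH. ring. Qed.

Lemma prodaff_repeat p q m z : prodaff (repeat (p, q) m) z = ((p * z + q) ^ m)%C.
Proof. induction m; simpl. reflexivity. rewrite IHm. simpl. ring. Qed.

Lemma prodaff_nz L z : (forall pq, In pq L -> (fst pq * z + snd pq)%C <> RtoC 0) -> prodaff L z <> RtoC 0.
Proof.
  induction L as [|h L IH]; intros H; simpl.
  - intro E. apply C1_nz. exact E.
  - apply Cmult_neq_0. apply H. left; auto. apply IH. intros; apply H; right; auto.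
Qed.

Definition cst_coef (c : C) (n : nat) : C := match n with O => c | S _ => RtoC 0 end.

Lemma Caddsub (l x : C) : l = Cplus (Cplus l x) (Copp x).
Proof. ring. Qed.

Lemma is_series_C_decr (u : nat -> C) l : is_series (V:=CF) (fun k => u (S k)) l -> is_series (V:=CF) u (l + u 0%nat)%C.
Proof.
  intros H. apply (is_series_decr_1 (K:=C_AbsRing) (V:=CF)).
  match goal with |- is_series _ ?m => replace m with l end. exact H.
  apply Caddsub.
Qed.

Lemma LR_const c z0 rho : 0 < rho -> LR (fun _ => c) z0 rho (cst_coef c).
Proof.
  intros Hr. split; [auto|split].
  - intros s Hs. apply ex_series_le_R with (fun n => Cmod c * (1/2) ^ n).
    + intros [|n]; simpl.
      * split; [apply Rmult_le_pos; [apply Cmod_ge_0|lra]|lra].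
      * rewrite Cmod_0, Rmult_0_l. split; [lra|]. apply Rmult_le_pos; [apply Cmod_ge_0|]. apply Rmult_le_pos; [lra|apply pow_le; lra].
    + apply ex_series_R_scal. exists (/ (1 - 1/2)). apply is_series_geom. rewrite Rabs_pos_eq; lra.
  - intros z Hz. replace c with (RtoC 0 + cst_coef c 0 * (z - z0) ^ 0)%C at 1 by (simpl; ring).
    apply is_series_C_decr.
    apply is_series_C_ext with (fun _ => RtoC 0). intros n. simpl. ring. apply is_series_C_zero.
Qed.

Lemma LR_prodaff L g z0 rho a : LR g z0 rho a -> exists a', LR (fun z => prodaff L z * g z)%C z0 rho a'.
Proof.
  revert a. induction L as [|[p q] L IH]; intros a H.
  - exists a. apply LR_ext with g; auto. intros z _. simpl. ring.
  - destruct (IH a H) as [a' H'].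
    exists (aff_coef p q z0 a'). apply LR_ext with (fun z => (p * z + q) * (prodaff L z * g z))%C.
    + apply LR_mul_aff. auto.
    + intros z _. simpl. ring.
Qed.

Lemma LR_poly L z0 rho : 0 < rho -> exists a, LR (prodaff L) z0 rho a.
Proof.
  intros Hr. destruct (LR_prodaff L _ _ _ _ (LR_const (RtoC 1) z0 rho Hr)) as [a Ha].
  exists a. apply LR_ext with (fun z => prodaff L z * RtoC 1)%C; auto. intros; ring.
Qed.

Lemma LR_nz_near g z0 rho a : LR g z0 rho a -> g z0 <> RtoC 0 ->
  exists d, 0 < d /\ forall z, Cmod (z - z0)%C < d -> g z <> RtoC 0.
Proof.
  intros HL Hg. assert (Hrho : 0 < rho) by (destruct HL; auto).
  destruct (LR_tail _ _ _ _ 0%nat (rho / 2) HL ltac:(lra)) as [C1 [HC1 HT]].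
  assert (Hm : 0 < Cmod (g z0)) by (apply Cmod_gt_0; auto).
  exists (Rmin (rho / 2) (Cmod (g z0) / (2 * (C1 + 1)))). split.
  { apply Rmin_pos; [lra|apply Rdiv_lt_0_compat; lra]. }
  intros z Hz E.
  assert (Hz1 : Cmod (z - z0)%C <= rho / 2) by (pose proof (Rmin_l (rho / 2) (Cmod (g z0) / (2 * (C1 + 1)))); lra).
  assert (Hz2 : Cmod (z - z0)%C <= Cmod (g z0) / (2 * (C1 + 1))) by (pose proof (Rmin_r (rho / 2) (Cmod (g z0) / (2 * (C1 + 1)))); lra).
  specialize (HT z Hz1). rewrite sum_O in HT. simpl in HT. rewrite <- (LR_value _ _ _ _ HL) in HT.
  rewrite E, Rmult_1_r in HT. replace (RtoC 0 - g z0 * 1)%C with (- g z0)%C in HT by ring. rewrite Cmod_opp in HT.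
  set (w := Cmod (z - z0)%C) in *. assert (0 <= w) by apply Cmod_ge_0.
  assert ((C1 + 1) * w <= (C1 + 1) * (Cmod (g z0) / (2 * (C1 + 1)))) by (apply Rmult_le_compat_l; lra).
  replace ((C1 + 1) * (Cmod (g z0) / (2 * (C1 + 1)))) with (Cmod (g z0) / 2) in H0 by (field; lra). nra.
Qed.


Definition numL (r : R) (l : list (C * nat)) : list (C * C) :=
  flat_map (fun am => repeat (RtoC 1, (- Cconj (fst am))%C) (snd am) ++ repeat ((- Cconj (fst am))%C, RtoC (r * r)) (snd am)) l.
Definition denL (r : R) (l : list (C * nat)) : list (C * C) :=
  flat_map (fun am => repeat (RtoC 1, (- fst am)%C) (snd am) ++ repeat ((- fst am)%C, RtoC (r * r)) (snd am)) l.

Definition phi (f : C -> C) r l (z : C) : C := (f z * prodaff (numL r l) z / prodaff (denL r l) z)%C.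

Definition limpt (g : C -> C) (z v : C) : Prop :=
  forall eps, 0 < eps -> exists d, 0 < d /\ forall w, 0 < Cmod (w - z)%C < d -> Cmod (g w - v)%C < eps.

Definition Gf (f : C -> C) r l (z : C) : C :=
  if excluded_middle_informative (prodaff (denL r l) z = RtoC 0)
  then epsilon (inhabits (RtoC 0)) (limpt (phi f r l) z)
  else phi f r l z.

Lemma limpt_unique g z v1 v2 : limpt g z v1 -> limpt g z v2 -> v1 = v2.
Proof.
  intros H1 H2. apply Ceq_minus. apply Cmod_eq_0. apply Rle_antisym; [|apply Cmod_ge_0].
  apply Rnot_lt_le. intros Hp.
  destruct (H1 (Cmod (v1 - v2)%C / 2) ltac:(lra)) as [d1 [Hd1 Hd1']].
  destruct (H2 (Cmod (v1 - v2)%C / 2) ltac:(lra)) as [d2 [Hd2 Hd2']].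
  set (d := Rmin d1 d2 / 2).
  assert (Hd : 0 < d) by (unfold d; assert (0 < Rmin d1 d2) by (apply Rmin_pos; auto); lra).
  set (w := (z + RtoC d)%C).
  assert (Hw : Cmod (w - z)%C = d) by (unfold w; replace (z + RtoC d - z)%C with (RtoC d) by ring; rewrite Cmod_R, Rabs_pos_eq; lra).
  assert (Hdd : d < Rmin d1 d2) by (unfold d; assert (0 < Rmin d1 d2) by (apply Rmin_pos; auto); lra).
  specialize (Hd1' w ltac:(rewrite Hw; pose proof (Rmin_l d1 d2); lra)).
  specialize (Hd2' w ltac:(rewrite Hw; pose proof (Rmin_r d1 d2); lra)).
  assert (Cmod (v1 - v2)%C <= Cmod (g w - v2)%C + Cmod (g w - v1)%C).
  { replace (v1 - v2)%C with ((g w - v2) + - (g w - v1))%C by ring.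
    eapply Rle_trans; [apply Cmod_triangle|]. rewrite Cmod_opp. lra. }
  lra.
Qed.

Lemma den_nz_gen r (L : list (C * C)) z : 0 < r -> Cmod z <= r ->
  (forall pq, In pq L -> (exists a, pq = (RtoC 1, (- a)%C) /\ a <> z) \/ (exists a, pq = ((- a)%C, RtoC (r * r)) /\ Cmod a < r)) ->
  prodaff L z <> RtoC 0.
Proof.
  intros Hr Hz H. apply prodaff_nz. intros pq Hpq. destruct (H pq Hpq) as [[a [-> Ha]]|[a [-> Ha]]]; simpl.
  - intro E. apply Ha. replace z with ((RtoC 1 * z + - a) + a)%C by ring. rewrite E. ring.
  - intro E. assert (E2 : (a * z)%C = RtoC (r * r)).
    { replace (a * z)%C with (RtoC (r * r) - (- a * z + RtoC (r * r)))%C by ring. rewrite E. ring. }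
    apply (f_equal Cmod) in E2. rewrite Cmod_mult, Cmod_R, Rabs_pos_eq in E2 by nra.
    assert (0 <= Cmod a) by apply Cmod_ge_0. assert (0 <= Cmod z) by apply Cmod_ge_0. nra.
Qed.

Lemma in_repeat_pos {T} (x y : T) n : In x (repeat y n) -> x = y /\ (0 < n)%nat.
Proof. intros H. split. apply (repeat_spec n y x H). destruct n; [destruct H|lia]. Qed.

Lemma den_nz r l z : 0 < r -> Cmod z <= r ->
  (forall am, In am l -> Cmod (fst am) < r /\ ((0 < snd am)%nat -> fst am <> z)) ->
  prodaff (denL r l) z <> RtoC 0.
Proof.
  intros Hr Hz H. apply (den_nz_gen r); auto. intros pq Hpq. unfold denL in Hpq.
  apply in_flat_map in Hpq. destruct Hpq as [am [Ham Hin]]. destruct (H am Ham) as [H1 H2].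
  apply in_app_or in Hin. destruct Hin as [Hin|Hin]; apply in_repeat_pos in Hin; destruct Hin as [-> Hm].
  - left. exists (fst am). auto.
  - right. exists (fst am). auto.
Qed.

Lemma denL_in r l pq : In pq (denL r l) -> exists am, In am l /\
  (pq = (RtoC 1, (- fst am)%C) \/ pq = ((- fst am)%C, RtoC (r * r))).
Proof.
  intros H. unfold denL in H. apply in_flat_map in H. destruct H as [am [Ham Hin]].
  exists am. split; auto. apply in_app_or in Hin. destruct Hin as [Hin|Hin]; apply repeat_spec in Hin; auto.
Qed.

Lemma den_split r l1 a m l2 z :
  prodaff (denL r (l1 ++ (a, m) :: l2)) z =
  ((RtoC 1 * z + - a) ^ m * prodaff (denL r l1 ++ repeat ((- a)%C, RtoC (r * r)) m ++ denL r l2) z)%C.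
Proof.
  unfold denL. rewrite flat_map_app. simpl. rewrite !prodaff_app, !prodaff_repeat. simpl. ring.
Qed.

Lemma Gf_LQ f r l U z0 : 0 < r -> (forall z, half_disc r z -> U z) -> analytic_on U f -> NoDup (map fst l) ->
  (forall am, In am l -> Cmod (fst am) < r /\ zero_order f (fst am) (snd am)) -> half_disc r z0 -> LQ (Gf f r l) z0.
Proof.
  intros Hr HU Han Hnd Hl Hz0.
  destruct (excluded_middle_informative (prodaff (denL r l) z0 = RtoC 0)) as [HD|HD].
  -
    assert (Hex : exists am, In am l /\ (0 < snd am)%nat /\ fst am = z0).
    { apply NNPP. intros Hn. apply (den_nz r l z0 Hr (proj1 Hz0)); auto.
      intros am Ham. split; [apply Hl; auto|]. intros Hm E. apply Hn. eauto. }
    destruct Hex as [[a m] [Ham [Hm Ea]]]. simpl in Hm, Ea. subst z0.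
    destruct (in_split _ _ Ham) as [l1 [l2 El]].
    destruct (proj2 (Hl _ Ham)) as [rho1 [Hrho1 [h [Hh [Hha Hfh]]]]]. simpl in *.
    set (D' := prodaff (denL r l1 ++ repeat ((- a)%C, RtoC (r * r)) m ++ denL r l2)).
    assert (Hnin : ~ In a (map fst l1 ++ map fst l2)).
    { rewrite El, map_app in Hnd. simpl in Hnd. apply (NoDup_remove_2 _ _ _ Hnd). }
    assert (HD' : D' a <> RtoC 0).
    { apply (den_nz_gen r); auto. apply (proj1 Hz0). intros pq Hpq.
      apply in_app_or in Hpq. destruct Hpq as [Hpq|Hpq]; [|apply in_app_or in Hpq; destruct Hpq as [Hpq|Hpq]].
      - destruct (denL_in r l1 pq Hpq) as [am [Ham1 [->| ->]]].
        + left. exists (fst am). split; auto. intro E. apply Hnin. apply in_or_app. left. rewrite <- E. apply in_map. auto.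
        + right. exists (fst am). split; auto. apply Hl. rewrite El. apply in_or_app. left. auto.
      - apply repeat_spec in Hpq. subst pq. right. exists a. split; auto. apply (Hl _ Ham).
      - destruct (denL_in r l2 pq Hpq) as [am [Ham1 [->| ->]]].
        + left. exists (fst am). split; auto. intro E. apply Hnin. apply in_or_app. right. rewrite <- E. apply in_map. auto.
        + right. exists (fst am). split; auto. apply Hl. rewrite El. apply in_or_app. right. right. auto. }
    destruct (LR_of_analytic _ h a Hh) as [rhoh [ah Hah]].
    { rewrite Cmod_zero_diff. auto. }
    destruct (LR_prodaff (numL r l) _ _ _ _ Hah) as [aF HF].
    destruct (LR_poly (denL r l1 ++ repeat ((- a)%C, RtoC (r * r)) m ++ denL r l2) a 1 Rlt_0_1) as [aP HP].
    fold D' in HP.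
    destruct (LR_nz_near _ _ _ _ HP HD') as [dl [Hdl Hdl']].
    assert (Hrhoh : 0 < rhoh) by (destruct Hah; auto).
    set (rho := Rmin (Rmin rhoh rho1) (Rmin dl 1)).
    assert (Hrho : 0 < rho) by (unfold rho; repeat apply Rmin_pos; lra).
    assert (Hr1 : rho <= rhoh) by (unfold rho; pose proof (Rmin_l (Rmin rhoh rho1) (Rmin dl 1)); pose proof (Rmin_l rhoh rho1); lra).
    assert (Hr2 : rho <= rho1) by (unfold rho; pose proof (Rmin_l (Rmin rhoh rho1) (Rmin dl 1)); pose proof (Rmin_r rhoh rho1); lra).
    assert (Hr3 : rho <= dl) by (unfold rho; pose proof (Rmin_r (Rmin rhoh rho1) (Rmin dl 1)); pose proof (Rmin_l dl 1); lra).
    assert (Hr4 : rho <= 1) by (unfold rho; pose proof (Rmin_r (Rmin rhoh rho1) (Rmin dl 1)); pose proof (Rmin_r dl 1); lra).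
    set (F := fun z => (prodaff (numL r l) z * h z)%C) in *.
    assert (Hoff : forall w, Cmod (w - a)%C < rho -> w <> a ->
              prodaff (denL r l) w <> RtoC 0 /\ phi f r l w = (F w / D' w)%C).
    { intros w Hw Hwa. assert (HD'w : D' w <> RtoC 0) by (apply Hdl'; lra).
      assert (Hwa' : (RtoC 1 * w + - a)%C <> RtoC 0).
      { intro E. apply Hwa. replace w with ((RtoC 1 * w + - a) + a)%C by ring. rewrite E. ring. }
      assert (Hden : prodaff (denL r l) w = ((RtoC 1 * w + - a) ^ m * D' w)%C) by (rewrite El; apply den_split).
      split.
      - rewrite Hden. apply Cmult_neq_0; auto. apply Cpow_nz. auto.
      - unfold phi. rewrite Hden. rewrite Hfh by lra. unfold F.
        replace (w - a)%C with (RtoC 1 * w + - a)%C by ring. field. split; auto. apply Cpow_nz; auto. }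
    exists rho, F, D', aF, aP. split; [apply (LR_shrink _ _ _ _ _ HF); lra|].
    split; [apply (LR_shrink _ _ _ _ _ HP); lra|].
    intros z Hz. split; [apply Hdl'; lra|].
    destruct (Ceq_dec z a) as [->|Hza].
    + unfold Gf. destruct (excluded_middle_informative (prodaff (denL r l) a = RtoC 0)) as [_|Hc]; [|contradiction].
      assert (Hlim : limpt (phi f r l) a (F a / D' a)%C).
      { intros eps He.
        assert (HLQ : LQ (fun z => (F z / D' z)%C) a).
        { exists rho, F, D', aF, aP. split; [apply (LR_shrink _ _ _ _ _ HF); lra|].
          split; [apply (LR_shrink _ _ _ _ _ HP); lra|]. intros z Hz'. split; [apply Hdl'; lra|auto]. }
        destruct (LQ_cont _ _ HLQ eps He) as [dc [Hdc Hdc']].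
        exists (Rmin dc rho). split; [apply Rmin_pos; lra|]. intros w [Hw0 Hw].
        assert (Hw1 : Cmod (w - a)%C < dc) by (pose proof (Rmin_l dc rho); lra).
        assert (Hw2 : Cmod (w - a)%C < rho) by (pose proof (Rmin_r dc rho); lra).
        assert (Hwa : w <> a). { intro E. rewrite E, Cmod_zero_diff in Hw0. lra. }
        rewrite (proj2 (Hoff w Hw2 Hwa)). apply Hdc'. auto. }
      apply (limpt_unique (phi f r l) a); auto. apply epsilon_spec. eauto.
    + unfold Gf. destruct (Hoff z Hz Hza) as [Hd Hp].
      destruct (excluded_middle_informative (prodaff (denL r l) z = RtoC 0)); [contradiction|auto].
  -
    destruct (LR_of_analytic _ f z0 Han (HU z0 Hz0)) as [rhof [af Haf]].
    destruct (LR_prodaff (numL r l) _ _ _ _ Haf) as [aF HF].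
    destruct (LR_poly (denL r l) z0 1 Rlt_0_1) as [aP HP].
    destruct (LR_nz_near _ _ _ _ HP HD) as [dl [Hdl Hdl']].
    assert (Hrhof : 0 < rhof) by (destruct Haf; auto).
    set (rho := Rmin rhof (Rmin dl 1)).
    assert (Hrho : 0 < rho) by (unfold rho; repeat apply Rmin_pos; lra).
    assert (Hr1 : rho <= rhof) by (unfold rho; apply Rmin_l).
    assert (Hr3 : rho <= dl) by (unfold rho; pose proof (Rmin_r rhof (Rmin dl 1)); pose proof (Rmin_l dl 1); lra).
    assert (Hr4 : rho <= 1) by (unfold rho; pose proof (Rmin_r rhof (Rmin dl 1)); pose proof (Rmin_r dl 1); lra).
    exists rho, (fun z => (prodaff (numL r l) z * f z)%C), (prodaff (denL r l)), aF, aP.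
    split; [apply (LR_shrink _ _ _ _ _ HF); lra|].
    split; [apply (LR_shrink _ _ _ _ _ HP); lra|].
    intros z Hz. assert (Hdz : prodaff (denL r l) z <> RtoC 0) by (apply Hdl'; lra).
    split; auto. unfold Gf. destruct (excluded_middle_informative (prodaff (denL r l) z = RtoC 0)); [contradiction|].
    unfold phi. field. auto.
Qed.


Lemma Lambda_gt1 r alpha beta eta Y : 0 < r -> 0 < eta -> 0 < Y -> 0 < alpha < 1 -> 0 < beta < 1 ->
  beta * ((1 - alpha) / (alpha + beta)) ^ 2 > Y / eta -> Lambda r alpha beta eta Y > 1.
Proof.
  intros Hr He HY0 Ha Hb H. unfold Lambda.
  assert (Hab : 0 < (alpha + beta) ^ 2) by (apply pow_lt; lra).
  assert (H1a : 0 < (1 - alpha) ^ 2) by (apply pow_lt; lra).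
  assert (HY : Y * (alpha + beta) ^ 2 < beta * eta * (1 - alpha) ^ 2).
  { replace (beta * ((1 - alpha) / (alpha + beta)) ^ 2) with (beta * (1 - alpha) ^ 2 / (alpha + beta) ^ 2) in H by (field; lra).
    apply Rlt_gt in H. unfold Rgt in H.
    apply (Rmult_lt_compat_r (eta * (alpha + beta) ^ 2)) in H; [|nra].
    replace (Y / eta * (eta * (alpha + beta) ^ 2)) with (Y * (alpha + beta) ^ 2) in H by (field; lra).
    replace (beta * (1 - alpha) ^ 2 / (alpha + beta) ^ 2 * (eta * (alpha + beta) ^ 2)) with (beta * eta * (1 - alpha) ^ 2) in H by (field; lra).
    auto. }
  assert (HA : 4 * Y / (1 - alpha) ^ 2 < 4 * beta * eta / (alpha + beta) ^ 2).
  { apply (Rmult_lt_reg_r ((1 - alpha) ^ 2 * (alpha + beta) ^ 2)); [nra|].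
    replace (4 * Y / (1 - alpha) ^ 2 * ((1 - alpha) ^ 2 * (alpha + beta) ^ 2)) with (4 * (Y * (alpha + beta) ^ 2)) by (field; lra).
    replace (4 * beta * eta / (alpha + beta) ^ 2 * ((1 - alpha) ^ 2 * (alpha + beta) ^ 2)) with (4 * (beta * eta * (1 - alpha) ^ 2)) by (field; lra).
    lra. }
  assert (HB0 : 0 <= 4 * Y / (1 - alpha) ^ 2).
  { apply Rdiv_le_0_compat; lra. }
  set (A := 4 * beta * eta / (alpha + beta) ^ 2) in *. set (B := 4 * Y / (1 - alpha) ^ 2) in *.
  assert (0 < 1 + B * / r) by (assert (0 <= B * / r) by (apply Rmult_le_pos; [lra|apply Rlt_le, Rinv_0_lt_compat; lra]); lra).
  apply Rlt_gt. apply (Rmult_lt_reg_r (1 + B * / r)); auto. rewrite Rmult_1_l.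
  unfold Rdiv at 1. rewrite Rmult_assoc, Rinv_l by lra. rewrite Rmult_1_r.
  apply Rplus_lt_compat_l. apply Rmult_lt_compat_r; [apply Rinv_0_lt_compat; lra|auto].
Qed.

Lemma blaschke_real r alpha beta eta Y x y : 0 < r -> 0 < alpha < 1 -> 0 < beta < 1 -> 0 < eta ->
  eta <= y <= Y -> x ^ 2 + y ^ 2 <= (alpha * r) ^ 2 ->
  Lambda r alpha beta eta Y * ((x ^ 2 + (beta * r - y) ^ 2) * ((r ^ 2 + y * beta * r) ^ 2 + (x * beta * r) ^ 2))
  <= (x ^ 2 + (beta * r + y) ^ 2) * ((r ^ 2 - y * beta * r) ^ 2 + (x * beta * r) ^ 2).
Proof.
  intros Hr Ha Hb He Hy Hxy.
  set (P1 := x ^ 2 + (beta * r - y) ^ 2). set (P2 := (r ^ 2 - y * beta * r) ^ 2 + (x * beta * r) ^ 2).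
  assert (EN1 : x ^ 2 + (beta * r + y) ^ 2 = P1 + 4 * beta * r * y) by (unfold P1; ring).
  assert (EQ2 : (r ^ 2 + y * beta * r) ^ 2 + (x * beta * r) ^ 2 = P2 + 4 * beta * r ^ 3 * y) by (unfold P2; ring).
  rewrite EN1, EQ2.
  assert (HP1 : 0 <= P1) by (unfold P1; apply Rplus_le_le_0_compat; apply pow2_ge_0).
  assert (HP1b : P1 <= (alpha + beta) ^ 2 * r ^ 2).
  { assert (E : (alpha + beta) ^ 2 * r ^ 2 - P1 = ((alpha * r) ^ 2 - (x ^ 2 + y ^ 2)) + 2 * (alpha * beta * r ^ 2) + 2 * (beta * r * y)) by (unfold P1; ring).
    assert (0 <= alpha * beta * r ^ 2) by (apply Rmult_le_pos; [nra|apply pow2_ge_0]).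
    assert (0 <= beta * r * y) by (apply Rmult_le_pos; [nra|lra]). lra. }
  assert (Hyr : y <= alpha * r).
  { assert (y ^ 2 <= (alpha * r) ^ 2) by (assert (0 <= x ^ 2) by apply pow2_ge_0; lra).
    assert (0 < alpha * r) by nra. destruct (Rle_or_lt y (alpha * r)); auto. nra. }
  assert (Hr2 : (1 - alpha) * r ^ 2 <= r ^ 2 - y * beta * r).
  { assert (H1 : y * beta * r <= y * r).
    { assert (0 <= y * r * (1 - beta)) by (apply Rmult_le_pos; [apply Rmult_le_pos|]; lra). nra. }
    assert (H2 : y * r <= alpha * r * r) by (apply Rmult_le_compat_r; lra).
    replace ((1 - alpha) * r ^ 2) with (r ^ 2 - alpha * r * r) by ring. lra. }
  assert (Hr3 : 0 <= (1 - alpha) * r ^ 2) by (apply Rmult_le_pos; [lra|apply pow2_ge_0]).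
  assert (HP2 : (1 - alpha) ^ 2 * r ^ 4 <= P2).
  { unfold P2. replace ((1 - alpha) ^ 2 * r ^ 4) with (((1 - alpha) * r ^ 2) ^ 2) by ring.
    assert (((1 - alpha) * r ^ 2) ^ 2 <= (r ^ 2 - y * beta * r) ^ 2) by (apply pow_incr; lra).
    assert (0 <= (x * beta * r) ^ 2) by apply pow2_ge_0. lra. }
  assert (HP2p : 0 < P2).
  { assert (0 < (1 - alpha) ^ 2 * r ^ 4) by (apply Rmult_lt_0_compat; apply pow_lt; lra). lra. }
  set (A := 4 * beta * eta / (alpha + beta) ^ 2). set (B := 4 * Y / (1 - alpha) ^ 2).
  assert (Hab : 0 < (alpha + beta) ^ 2) by (apply pow_lt; lra).
  assert (H1a : 0 < (1 - alpha) ^ 2) by (apply pow_lt; lra).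
  assert (HN : P1 * (1 + A * / r) <= P1 + 4 * beta * r * y).
  { unfold A. assert (P1 * (4 * beta * eta / (alpha + beta) ^ 2 * / r) <= 4 * beta * r * eta).
    { replace (P1 * (4 * beta * eta / (alpha + beta) ^ 2 * / r)) with (4 * beta * eta * (P1 / ((alpha + beta) ^ 2 * r))) by (field; lra).
      replace (4 * beta * r * eta) with (4 * beta * eta * ((alpha + beta) ^ 2 * r ^ 2 / ((alpha + beta) ^ 2 * r))) by (field; lra).
      apply Rmult_le_compat_l; [nra|]. apply Rmult_le_compat_r; [apply Rlt_le, Rinv_0_lt_compat; nra|]. auto. }
    assert (4 * beta * r * eta <= 4 * beta * r * y) by (apply Rmult_le_compat_l; [nra|lra]).
    rewrite Rmult_plus_distr_l, Rmult_1_r. lra. }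
  assert (HQ : P2 + 4 * beta * r ^ 3 * y <= P2 * (1 + B * / r)).
  { unfold B. assert (4 * beta * r ^ 3 * y <= P2 * (4 * Y / (1 - alpha) ^ 2 * / r)).
    { assert (4 * beta * r ^ 3 * y <= 4 * r ^ 3 * Y).
      { assert (0 < r ^ 3) by (apply pow_lt; lra).
        assert (beta * y <= Y) by (assert (0 <= y * (1 - beta)) by (apply Rmult_le_pos; lra); nra).
        replace (4 * beta * r ^ 3 * y) with (4 * r ^ 3 * (beta * y)) by ring.
        apply Rmult_le_compat_l; lra. }
      assert (0 <= Y) by lra.
      assert (4 * r ^ 3 * Y <= P2 * (4 * Y / (1 - alpha) ^ 2 * / r)).
      { replace (P2 * (4 * Y / (1 - alpha) ^ 2 * / r)) with (4 * Y * (P2 / ((1 - alpha) ^ 2 * r))) by (field; lra).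
        replace (4 * r ^ 3 * Y) with (4 * Y * ((1 - alpha) ^ 2 * r ^ 4 / ((1 - alpha) ^ 2 * r))) by (field; lra).
        apply Rmult_le_compat_l; [lra|]. apply Rmult_le_compat_r; [apply Rlt_le, Rinv_0_lt_compat; nra|]. auto. }
      lra. }
    lra. }
  assert (HBp : 0 < 1 + B * / r).
  { assert (0 <= B * / r) by (unfold B; apply Rmult_le_pos; [apply Rdiv_le_0_compat; lra|apply Rlt_le, Rinv_0_lt_compat; lra]). lra. }
  unfold Lambda. fold A B.
  assert (HL : 0 <= (1 + A * / r) / (1 + B * / r)).
  { apply Rdiv_le_0_compat; [|lra]. assert (0 <= A * / r) by (unfold A; apply Rmult_le_pos; [apply Rdiv_le_0_compat; nra|apply Rlt_le, Rinv_0_lt_compat; lra]). lra. }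
  eapply Rle_trans. apply Rmult_le_compat_l; [auto|]. apply Rmult_le_compat_l; [auto|]. exact HQ.
  assert (HB0 : 0 <= B) by (unfold B; apply Rdiv_le_0_compat; lra).   replace ((1 + A * / r) / (1 + B * / r) * (P1 * (P2 * (1 + B * / r)))) with (P1 * (1 + A * / r) * P2) by (field; lra).
  apply Rmult_le_compat_r; lra.
Qed.

Lemma blaschke_C r alpha beta eta Y (a : C) : 0 < r -> 0 < alpha < 1 -> 0 < beta < 1 -> 0 < eta ->
  eta <= Im a <= Y -> Cmod a <= alpha * r ->
  let c := ((0, beta * r) : C) in
  Lambda r alpha beta eta Y * ((Cmod (RtoC 1 * c + - a)%C ^ 2) * (Cmod (- a * c + RtoC (r * r))%C ^ 2))
  <= (Cmod (RtoC 1 * c + - Cconj a)%C ^ 2) * (Cmod (- Cconj a * c + RtoC (r * r))%C ^ 2).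
Proof.
  intros Hr Ha Hb He Hy Hm c.
  assert (Hm2 : Re a ^ 2 + Im a ^ 2 <= (alpha * r) ^ 2).
  { rewrite <- Cmod2_alt. apply pow_incr. split; [apply Cmod_ge_0|auto]. }
  rewrite !Cmod2_alt. destruct a as [x y]. unfold c. simpl in *.
  assert (H := blaschke_real r alpha beta eta Y x y Hr Ha Hb He Hy Hm2).
  match goal with |- ?L <= ?Rr => replace L with (Lambda r alpha beta eta Y * ((x ^ 2 + (beta * r - y) ^ 2) * ((r ^ 2 + y * beta * r) ^ 2 + (x * beta * r) ^ 2))) by ring;
    replace Rr with ((x ^ 2 + (beta * r + y) ^ 2) * ((r ^ 2 - y * beta * r) ^ 2 + (x * beta * r) ^ 2)) by ring end.
  exact H.
Qed.

Lemma boundary_factor r (a q : C) : 0 < r -> half_disc_boundary r q ->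
  (Cmod (RtoC 1 * q + - Cconj a)%C * Cmod (- Cconj a * q + RtoC (r * r))%C) =
  (Cmod (RtoC 1 * q + - a)%C * Cmod (- a * q + RtoC (r * r))%C).
Proof.
  intros Hr Hq. apply Rsqr_inj.
  - apply Rmult_le_pos; apply Cmod_ge_0.
  - apply Rmult_le_pos; apply Cmod_ge_0.
  - rewrite !Rsqr_mult, !Rsqr_pow2, !Cmod2_alt.
    destruct a as [x y]. destruct q as [u v]. simpl in *.
    destruct Hq as [[Hv _]|[Hc Hv]].
    + unfold Im in Hv. simpl in Hv. rewrite Hv. ring.
    + assert (Hr2 : r * r = u * u + v * v).
      { assert (H := Cmod2_alt (u, v)). rewrite Hc in H. simpl in H. lra. }
      rewrite !Hr2. ring.
Qed.

Lemma num_cons r a m l z : prodaff (numL r ((a, m) :: l)) z =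
  ((RtoC 1 * z + - Cconj a) ^ m * (- Cconj a * z + RtoC (r * r)) ^ m * prodaff (numL r l) z)%C.
Proof. unfold numL. simpl. rewrite !prodaff_app, !prodaff_repeat. ring. Qed.

Lemma den_cons r a m l z : prodaff (denL r ((a, m) :: l)) z =
  ((RtoC 1 * z + - a) ^ m * (- a * z + RtoC (r * r)) ^ m * prodaff (denL r l) z)%C.
Proof. unfold denL. simpl. rewrite !prodaff_app, !prodaff_repeat. ring. Qed.

Lemma boundary_prod r l q : 0 < r -> half_disc_boundary r q ->
  Cmod (prodaff (numL r l) q) = Cmod (prodaff (denL r l) q).
Proof.
  intros Hr Hq. induction l as [|[a m] l IH].
  - reflexivity.
  - rewrite num_cons, den_cons, !Cmod_mult, !Cmod_pow, IH.
    f_equal. rewrite <- !Rpow_mult_distr. f_equal. apply boundary_factor; auto.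
Qed.

Lemma interior_prod r alpha beta eta Y l : 0 < r -> 0 < alpha < 1 -> 0 < beta < 1 -> 0 < eta -> 0 < Y ->
  (forall am, In am l -> eta <= Im (fst am) <= Y /\ Cmod (fst am) <= alpha * r) ->
  let c := ((0, beta * r) : C) in
  Lambda r alpha beta eta Y ^ (list_sum (map snd l)) * Cmod (prodaff (denL r l) c) ^ 2 <= Cmod (prodaff (numL r l) c) ^ 2.
Proof.
  intros Hr Ha Hb He HY Hl c. induction l as [|[a m] l IH].
  - simpl. lra.
  - simpl list_sum. rewrite num_cons, den_cons, !Cmod_mult, !Cmod_pow.
    assert (IH' := IH (fun am H => Hl am (or_intror H))).
    destruct (Hl (a, m) (or_introl eq_refl)) as [Hy Hm]. simpl in Hy, Hm.
    assert (Hf := blaschke_C r alpha beta eta Y a Hr Ha Hb He Hy Hm). fold c in Hf.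
    set (L := Lambda r alpha beta eta Y) in *.
    set (A1 := Cmod (RtoC 1 * c + - a)%C) in *. set (B1 := Cmod (- a * c + RtoC (r * r))%C) in *.
    set (A2 := Cmod (RtoC 1 * c + - Cconj a)%C) in *. set (B2 := Cmod (- Cconj a * c + RtoC (r * r))%C) in *.
    set (Rd := Cmod (prodaff (denL r l) c)) in *. set (Rn := Cmod (prodaff (numL r l) c)) in *.
    assert (HL : 0 <= L).
    { unfold L, Lambda. apply Rdiv_le_0_compat.
      - assert (0 <= 4 * beta * eta / (alpha + beta) ^ 2 * / r).
        { apply Rmult_le_pos; [apply Rdiv_le_0_compat; [nra|apply pow_lt; lra]|apply Rlt_le, Rinv_0_lt_compat; lra]. }
        lra.
      - assert (0 <= 4 * Y / (1 - alpha) ^ 2 * / r).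
        { apply Rmult_le_pos; [apply Rdiv_le_0_compat; [lra|apply pow_lt; lra]|apply Rlt_le, Rinv_0_lt_compat; lra]. }
        lra. }
    assert (E : (A1 ^ m * B1 ^ m * Rd) ^ 2 = ((A1 ^ 2 * B1 ^ 2) ^ m) * Rd ^ 2).
    { rewrite !Rpow_mult_distr, <- !pow_mult, (Nat.mul_comm m 2). reflexivity. }
    assert (E2 : (A2 ^ m * B2 ^ m * Rn) ^ 2 = ((A2 ^ 2 * B2 ^ 2) ^ m) * Rn ^ 2).
    { rewrite !Rpow_mult_distr, <- !pow_mult, (Nat.mul_comm m 2). reflexivity. }
    rewrite E, E2, pow_add.
    assert (Hm1 : L ^ m * (A1 ^ 2 * B1 ^ 2) ^ m <= (A2 ^ 2 * B2 ^ 2) ^ m).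
    { rewrite <- Rpow_mult_distr. apply pow_incr. split; [|exact Hf]. apply Rmult_le_pos; [auto|]. apply Rmult_le_pos; apply pow2_ge_0. }
    assert (0 <= L ^ m * (A1 ^ 2 * B1 ^ 2) ^ m) by (apply Rmult_le_pos; apply pow_le; [auto|apply Rmult_le_pos; apply pow2_ge_0]).
    assert (0 <= L ^ list_sum (map snd l) * Rd ^ 2) by (apply Rmult_le_pos; [apply pow_le; auto|apply pow2_ge_0]).
    replace (L ^ m * L ^ list_sum (map snd l) * ((A1 ^ 2 * B1 ^ 2) ^ m * Rd ^ 2))
      with ((L ^ m * (A1 ^ 2 * B1 ^ 2) ^ m) * (L ^ list_sum (map snd l) * Rd ^ 2)) by ring.
    apply Rmult_le_compat; auto.
Qed.


Lemma bd_in r q : 0 < r -> half_disc_boundary r q -> half_disc r q.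
Proof.
  intros Hr [[Hi Hre]|[Hc Hi]].
  - split; [|lra]. assert (H := Cmod2_alt q). rewrite Hi in H.
    assert (Re q ^ 2 <= r ^ 2) by (rewrite <- (pow2_abs (Re q)); apply pow_incr; split; [apply Rabs_pos|apply Rabs_le; lra]).
    assert (0 <= Cmod q) by apply Cmod_ge_0. destruct (Rle_or_lt (Cmod q) r); auto. nra.
  - split; lra.
Qed.

Lemma LQ_of_analytic U f z : analytic_on U f -> U z -> LQ f z.
Proof.
  intros Han Hz. destruct (LR_of_analytic _ _ _ Han Hz) as [rho [a Ha]].
  assert (Hr : 0 < rho) by (destruct Ha; auto).
  exists rho, f, (fun _ => RtoC 1), a, (cst_coef (RtoC 1)). split; auto. split; [apply LR_const; auto|].
  intros w _. split; [apply C1_nz|]. field. apply C1_nz.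
Qed.

Lemma sup_ge r f U q : 0 < r -> (forall z, half_disc r z -> U z) -> analytic_on U f ->
  half_disc_boundary r q -> Cmod (f q) <= sup_boundary r f.
Proof.
  intros Hr HU Han Hq.
  destruct (evt r (fun z => Cmod (f z)) Hr) as [p [Hp Hmax]].
  { intros z Hz eps He. destruct (LQ_cont _ _ (LQ_of_analytic U f z Han (HU z Hz)) eps He) as [d [Hd Hd']].
    exists d. split; auto. intros w _ Hw. eapply Rle_lt_trans; [apply Cmod_rev_tri|]. auto. }
  unfold sup_boundary. destruct (Lub_Rbar_correct (fun x => exists z, half_disc_boundary r z /\ x = Cmod (f z))) as [Hub Hlub].
  assert (H1 := Hub (Cmod (f q)) (ex_intro _ q (conj Hq eq_refl))).
  assert (H2 := Hlub (Finite (Cmod (f p)))).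
  destruct (Lub_Rbar _) as [x| |]; simpl in *; auto.
  - exfalso. apply H2. intros y [z [Hz ->]]. simpl. apply Hmax. apply bd_in; auto.
  - contradiction.
Qed.

Lemma zero_order_zero f a m : zero_order f a m -> (0 < m)%nat -> f a = RtoC 0.
Proof.
  intros [rho [Hr [h [_ [_ Hf]]]]] Hm. rewrite Hf by (rewrite Cmod_zero_diff; auto).
  destruct m; [lia|]. rewrite Cpow_S. replace (a - a)%C with (RtoC 0) by ring. ring.
Qed.

Theorem mainTheorem8 :
  forall (r : R) (f : C -> C) (Y eta alpha beta : R),
    0 < r ->
    analytic_near_half_disc r f ->
    0 < eta -> eta < Y -> Y < r ->
    0 < alpha < 1 -> 0 < beta < 1 ->
    beta * ((1 - alpha) / (alpha + beta)) ^ 2 > Y / eta ->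
    f (0, beta * r) <> 0%C ->
    (forall l : list (C * nat),
        NoDup (map fst l) ->
        List.Forall (fun p => strip_region (alpha * r) eta Y (fst p) /\
                         zero_order f (fst p) (snd p)) l ->
        INR (list_sum (map snd l)) <=
          2 / ln (Lambda r alpha beta eta Y) *
          ln (/ Rmin beta (1 - beta) *
              (sup_boundary r f / Cmod (f (0, beta * r))))) /\
    Lambda r alpha beta eta Y > 1.
Proof.
  intros r f Y eta alpha beta Hr Han He HeY HYr Ha Hb Hcond Hfc.
  assert (HLam : Lambda r alpha beta eta Y > 1) by (apply Lambda_gt1; auto; lra).
  split; auto.
  intros l Hnd Hl. rewrite Forall_forall in Hl.
  destruct Han as [U [_ [HU Hf]]].
  set (c := ((0, beta * r) : C)) in *.
  assert (Hl' : forall am, In am l -> Cmod (fst am) < r /\ zero_order f (fst am) (snd am)).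
  { intros am Ham. destruct (Hl am Ham) as [[_ Hc] Hz]. split; auto. nra. }
  destruct (maxprin r (Gf f r l) Hr (fun z Hz => Gf_LQ f r l U z Hr HU Hf Hnd Hl' Hz)) as [q [Hq Hmax]].
  assert (Hc : half_disc r c).
  { unfold c, half_disc. simpl. split; [|nra]. rewrite Cmod_im0, Rabs_pos_eq by nra. nra. }
  assert (HDc : prodaff (denL r l) c <> RtoC 0).
  { apply den_nz; auto. apply Hc. intros am Ham. split; [apply Hl'; auto|]. intros Hm E.
    apply Hfc. fold c. rewrite <- E. apply (zero_order_zero f _ (snd am)); auto. apply Hl'; auto. }
  assert (Hqin : half_disc r q) by (apply bd_in; auto).
  assert (HDq : prodaff (denL r l) q <> RtoC 0).
  { apply den_nz; auto. apply Hqin. intros am Ham. split; [apply Hl'; auto|]. intros Hm E.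
    destruct (Hl am Ham) as [[[Hi1 Hi2] Hcm] _]. rewrite E in Hi1, Hcm.
    destruct Hq as [[Hq1 _]|[Hq1 _]]; [lra|nra]. }
  assert (HGc : Gf f r l c = phi f r l c).
  { unfold Gf. destruct (excluded_middle_informative (prodaff (denL r l) c = RtoC 0)); [contradiction|auto]. }
  assert (HGq : Gf f r l q = phi f r l q).
  { unfold Gf. destruct (excluded_middle_informative (prodaff (denL r l) q = RtoC 0)); [contradiction|auto]. }
  specialize (Hmax c Hc). rewrite HGc, HGq in Hmax. unfold phi in Hmax.
  rewrite !Cmod_div, !Cmod_mult in Hmax by auto.
  rewrite (boundary_prod r l q Hr Hq) in Hmax.
  set (M := sup_boundary r f).
  assert (HM : Cmod (f q) <= M) by (apply (sup_ge r f U q); auto).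
  set (Nc := Cmod (prodaff (numL r l) c)) in *. set (Dc := Cmod (prodaff (denL r l) c)) in *.
  set (Dq := Cmod (prodaff (denL r l) q)) in *.
  assert (HDcp : 0 < Dc) by (apply Cmod_gt_0; auto).
  assert (HDqp : 0 < Dq) by (apply Cmod_gt_0; auto).
  set (fc := Cmod (f c)) in *.
  assert (Hfcp : 0 < fc) by (apply Cmod_gt_0; auto).
  replace (Cmod (f q) * Dq / Dq) with (Cmod (f q)) in Hmax by (field; lra).
  assert (H1 : fc * Nc <= M * Dc).
  { apply (Rmult_le_compat_r Dc) in Hmax; [|lra]. replace (fc * Nc / Dc * Dc) with (fc * Nc) in Hmax by (field; lra).
    assert (Cmod (f q) * Dc <= M * Dc) by (apply Rmult_le_compat_r; lra). lra. }
  set (n := list_sum (map snd l)).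
  set (L := Lambda r alpha beta eta Y) in *.
  assert (HI : L ^ n * Dc ^ 2 <= Nc ^ 2).
  { apply (interior_prod r alpha beta eta Y l); auto; try lra.
    intros am Ham. destruct (Hl am Ham) as [[[Hi1 Hi2] Hcm] _]. auto. }
  assert (HNc : 0 <= Nc) by apply Cmod_ge_0.
  assert (HM0 : 0 <= M) by (assert (0 <= Cmod (f q)) by apply Cmod_ge_0; lra).
  assert (H2 : fc ^ 2 * (L ^ n * Dc ^ 2) <= M ^ 2 * Dc ^ 2).
  { eapply Rle_trans. apply Rmult_le_compat_l; [apply pow2_ge_0|exact HI].
    replace (fc ^ 2 * Nc ^ 2) with ((fc * Nc) ^ 2) by ring. replace (M ^ 2 * Dc ^ 2) with ((M * Dc) ^ 2) by ring.
    apply pow_incr. split; auto. apply Rmult_le_pos; lra. }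
  assert (H3 : L ^ n <= (M / fc) ^ 2).
  { replace ((M / fc) ^ 2) with (M ^ 2 / fc ^ 2) by (field; lra).
    apply (Rmult_le_reg_r (fc ^ 2 * Dc ^ 2)). apply Rmult_lt_0_compat; apply pow_lt; lra.
    replace (M ^ 2 / fc ^ 2 * (fc ^ 2 * Dc ^ 2)) with (M ^ 2 * Dc ^ 2) by (field; lra). nra. }
  assert (HLp : 0 < L) by lra.
  assert (HLn : 0 < L ^ n) by (apply pow_lt; lra).
  assert (HMp : 0 < M / fc).
  { destruct (Rle_lt_or_eq_dec _ _ HM0) as [|E]. apply Rdiv_lt_0_compat; lra.
    rewrite <- E in H3. unfold Rdiv in H3. rewrite Rmult_0_l in H3. simpl in H3. lra. }
  assert (H4 : INR n * ln L <= 2 * ln (M / fc)).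
  { rewrite <- ln_pow by auto. replace (2 * ln (M / fc)) with (ln ((M / fc) ^ 2)) by (rewrite ln_pow by auto; simpl; ring).
    apply ln_le; auto. }
  assert (HlnL : 0 < ln L) by (rewrite <- ln_1; apply ln_increasing; lra).
  set (mb := Rmin beta (1 - beta)).
  assert (Hmb : 0 < mb <= 1) by (unfold mb; split; [apply Rmin_pos; lra|pose proof (Rmin_l beta (1 - beta)); lra]).
  assert (Hinv : 1 <= / mb).
  { rewrite <- Rinv_1. apply Rinv_le_contravar; lra. }
  assert (Hlninv : 0 <= ln (/ mb)) by (rewrite <- ln_1; apply ln_le; lra).
  rewrite ln_mult by (try lra; apply Rinv_0_lt_compat; lra).
  replace (M / Cmod (f c)) with (M / fc) by reflexivity.
  apply (Rmult_le_reg_r (ln L / 2)). apply Rdiv_lt_0_compat; lra.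
  replace (2 / ln L * (ln (/ mb) + ln (M / fc)) * (ln L / 2)) with (ln (/ mb) + ln (M / fc)) by (field; lra).
  lra.
Qed.
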